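(* Let $R$ be a commutative domain, $B=R(t,\sigma,H,J)$, let $\mathcal O\subseteq\operatorname{Maxspec}(R)$ be an infinite $\sigma$-orbit and $\beta\subseteq\mathcal O$ its set of breaks. (1) If $\beta=\emptyset$, then $M(\mathcal O)$ is a simple $R$-weight $B$-module, and every simple $B$-module that is an $R$-weight module with support in $\mathcal O$ is isomorphic to $M(\mathcal O)$. (2) If $\beta\neq\emptyset$, then the modules $M(\mathcal O,\mathfrak n)$, $\mathfrak n\in\beta'$, are simple $R$-weight $B$-modules, and every simple $B$-module that is an $R$-weight module with support in $\mathcal O$ is isomorphic to exactly one of them.
   Context: $\Bbbk$ is a field; all algebras are associative unital $\Bbbk$-algebras. For an algebra $R$ and $\sigma\in\operatorname{Aut}_\Bbbk(R)$, $R[t,t^{-1};\sigma]$ is the skew Laurent ring: generated over $R$ by $t,t^{-1}$ with $tt^{-1}=t^{-1}t=1$ and $t^{\pm1}r=\sigma^{\pm1}(r)t^{\pm1}$ for $r\in R$. Given two-sided ideals $H,J$ of $R$, set $I^{(0)}=R$, $I^{(n)}=J\sigma(J)\cdots\sigma^{n-1}(J)$ for $n\ge1$, and $I^{(n)}=\sigma^{-1}(H)\sigma^{-2}(H)\cdots\sigma^{n}(H)$ for $n\le-1$; it is assumed throughout that $I^{(n)}\neq0$ for all $n\in\mathbb Z$. The Bell–Rogalski (BR) algebra is $R(t,\sigma,H,J)=\bigoplus_{n\in\mathbb Z}I^{(n)}t^n\subseteq R[t,t^{-1};\sigma]$; it is generated by $R$, $Jt$ and $\sigma^{-1}(H)t^{-1}$.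 For $R$ commutative, $\mathcal S(B)=\{\mathfrak p\in\operatorname{Spec}(R):\mathfrak p\supseteq HJ\}$. For $R$ a commutative domain, a left $B$-module $M$ is an $R$-weight module if $M=\bigoplus_{\mathfrak m\in\operatorname{Maxspec}(R)}M_{\mathfrak m}$ where $M_{\mathfrak m}=\{v\in M:\mathfrak m v=0\}$ and $\dim_{R/\mathfrak m}M_{\mathfrak m}<\infty$ for all $\mathfrak m$. $\mathbb Z$ acts on $\operatorname{Maxspec}(R)$ by $k\cdot\mathfrak m=\sigma^k(\mathfrak m)$; orbits are called $\sigma$-orbits. A maximal ideal $\mathfrak m$ is a break for $B$ if $\sigma(\mathfrak m)\in\mathcal S(B)$. For an infinite orbit $\mathcal O$, order it by $\sigma^a(\mathfrak m)<\sigma^b(\mathfrak m)$ iff $a<b$, extended to $\mathcal O\cup\{\pm\infty\}$. Define $M(\mathcal O)=\bigoplus_{\mathfrak m\in\mathcal O}(R/\mathfrak m)v_{\mathfrak m}$ with $R$ acting naturally, $jt\cdot v_{\mathfrak m}=jv_{\sigma(\mathfrak m)}$ and $\sigma^{-1}(h)t^{-1}\cdot v_{\mathfrak m}=\sigma^{-1}(h)v_{\sigma^{-1}(\mathfrak m)}$ for $j\in J,h\in H$. If the set of breaks $\beta\subseteq\mathcal O$ is nonempty, let $\beta'=\beta\cup\{\infty\}$ if $\beta$ has a maximal element and $\beta'=\beta$ otherwise; for $\mathfrak n\in\beta'$ let $\mathfrak n^-$ be the largest element of $\beta'$ smaller than $\mathfrak n$, or $-\infty$ if none. Define $M(\mathcal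 O,\mathfrak n)=\bigoplus_{\mathfrak m\in\mathcal O,\ \mathfrak n^-<\mathfrak m\le\mathfrak n}(R/\mathfrak m)v_{\mathfrak m}$ (with $\mathfrak m<\infty$ when $\mathfrak n=\infty$), with $R$ acting naturally, $jt\cdot v_{\mathfrak m}=jv_{\sigma(\mathfrak m)}$ if $\mathfrak m<\mathfrak n$ and $=0$ if $\mathfrak m=\mathfrak n$, and $\sigma^{-1}(h)t^{-1}\cdot v_{\mathfrak m}=\sigma^{-1}(h)v_{\sigma^{-1}(\mathfrak m)}$ if $\sigma^{-1}(\mathfrak m)>\mathfrak n^-$ and $=0$ if $\sigma^{-1}(\mathfrak m)=\mathfrak n^-$. *)

(* Defs.v *)
From HB Require Import structures.
From mathcomp Require Import all_boot all_order all_algebra.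
From Stdlib Require List ClassicalEpsilon.
Set Implicit Arguments. Unset Strict Implicit. Unset Printing Implicit Defensive.
Import Order.TTheory GRing.Theory Num.Theory.
Local Open Scope ring_scope.

Section Ideals.
Variable R : comNzRingType.
Implicit Types I K : R -> Prop.

Definition incl I K := forall x, I x -> K x.

Definition is_ideal I :=
  I 0 /\ (forall x y, I x -> I y -> I (x + y)) /\ (forall r x, I x -> I (r * x)).

Definition is_prime_ideal I :=
  is_ideal I /\ ~ I 1 /\ (forall x y, I (x * y) -> I x \/ I y).

Definition is_max_ideal I :=
  is_ideal I /\ ~ I 1 /\
  (forall K, is_ideal K -> incl I K -> incl K I \/ K 1).

Definition idprod I K : R -> Prop := fun x =>
  exists s : seq (R * R),
    List.Forall (fun p => I p.1 /\ K p.2) s /\ x = \sum_(p <- s) p.1 * p.2.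
End Ideals.

Section BRalg.
Variable R : comNzRingType.
Variables (sigma sigmai : R -> R).

Definition spow (n : int) : R -> R :=
  match n with Posz k => iter k sigma | Negz k => iter k.+1 sigmai end.

(* sigma^n(I) = { sigma^n y | y in I } = { x | sigma^(-n) x in I } *)
Definition simg (n : int) (I : R -> Prop) : R -> Prop := fun x => I (spow (- n) x).

Variables H J : R -> Prop.

Fixpoint Jprod (k : nat) : R -> Prop :=
  match k with 0 => fun _ => True | k'.+1 => idprod (Jprod k') (simg (Posz k') J) end.
(* sigma^-1(H) sigma^-2(H) ... sigma^-k(H) *)
Fixpoint Hprod (k : nat) : R -> Prop :=
  match k with 0 => fun _ => True | k'.+1 => idprod (Hprod k') (simg (Negz k') H) end.

(* I^(n); B = (+)_n I^(n) t^n *)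
Definition Ipow (n : int) : R -> Prop :=
  match n with Posz k => Jprod k | Negz k => Hprod k.+1 end.

(* A left B-module: an abelian group with, for each n and r in I^(n),
   the action of the homogeneous element r t^n of B.  Since
   B = (+)_n I^(n) t^n with (r t^n)(s t^m) = r sigma^n(s) t^(n+m), this is
   exactly a left B-module.  Values of [mact n r] for r outside I^(n) are
   irrelevant (never used). *)
Record bmod := BMod {
  mcar : Type;
  mzero : mcar;
  madd : mcar -> mcar -> mcar;
  mopp : mcar -> mcar;
  mact : int -> R -> mcar -> mcar }.
Arguments mzero : clear implicits.
Arguments mact : clear implicits.

Definition is_bmod (M : bmod) :=
  (forall x y z : mcar M, madd x (madd y z) = madd (madd x y) z) /\
  (forall x y : mcar M, madd x y = madd y x) /\
  (forall x, madd (mzero M) x = x) /\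
  (forall x, madd (mopp x) x = mzero M) /\
  (forall n r x y, Ipow n r -> mact M n r (madd x y) = madd (mact M n r x) (mact M n r y)) /\
  (forall n r s x, Ipow n r -> Ipow n s ->
      mact M n (r + s) x = madd (mact M n r x) (mact M n s x)) /\
  (forall n m r s x, Ipow n r -> Ipow m s ->
      mact M n r (mact M m s x) = mact M (n + m) (r * spow n s) x) /\
  (forall x, mact M 0 1 x = x).

Definition is_submod (M : bmod) (N : mcar M -> Prop) :=
  N (mzero M) /\ (forall x y, N x -> N y -> N (madd x y)) /\
  (forall x, N x -> N (mopp x)) /\
  (forall n r x, Ipow n r -> N x -> N (mact M n r x)).

Definition is_simple (M : bmod) :=
  (exists v : mcar M, v <> mzero M) /\
  (forall N, is_submod N -> (forall x, N x -> x = mzero M) \/ (forall x, N x)).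

Definition bmod_iso (M M' : bmod) :=
  exists f : mcar M -> mcar M',
    bijective f /\ (forall x y, f (madd x y) = madd (f x) (f y)) /\
    (forall n r x, Ipow n r -> f (mact M n r x) = mact M' n r (f x)).

Definition msum (M : bmod) (l : list (mcar M)) := List.fold_right (@madd M) (mzero M) l.
Arguments msum : clear implicits.

(* weight space M_m = { v | m v = 0 }, R acting as R t^0 *)
Definition wspace (M : bmod) (m : R -> Prop) (v : mcar M) :=
  forall r, m r -> mact M 0 r v = mzero M.
Arguments wspace : clear implicits.

(* M = (+)_{m in Maxspec R} M_m with each M_m finite dimensional over R/m *)
Definition is_weight (M : bmod) :=
  (forall v : mcar M, exists s : list ((R -> Prop) * mcar M),
      List.Forall (fun p => is_max_ideal p.1 /\ wspace M p.1 p.2) s /\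
      v = msum M (List.map snd s)) /\
  (forall s : list ((R -> Prop) * mcar M),
      List.NoDup (List.map fst s) ->
      List.Forall (fun p => is_max_ideal p.1 /\ wspace M p.1 p.2) s ->
      msum M (List.map snd s) = mzero M -> List.Forall (fun p => p.2 = mzero M) s) /\
  (forall m, is_max_ideal m -> exists bs : list (mcar M),
      List.Forall (wspace M m) bs /\
      forall v, wspace M m v -> exists cs : list R,
        List.length cs = List.length bs /\
        v = msum M (List.map (fun p => mact M 0 p.1 p.2) (List.combine cs bs))).

Variable m0 : R -> Prop.

Definition orb (a : int) : R -> Prop := simg a m0.

Definition orbit_infinite :=
  ~ exists l : list (R -> Prop), forall a, List.In (orb a) l.

Definition supp_in_orbit (M : bmod) :=
  forall m, is_max_ideal m -> (exists v, wspace M m v /\ v <> mzero M) ->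
    exists a, m = orb a.

Definition is_break (m : R -> Prop) :=
  is_prime_ideal (simg 1 m) /\ incl (idprod H J) (simg 1 m).

Definition brk (a : int) := is_break (orb a).

(* beta' : Some b = sigma^b(m0) with b a break, None = +infinity *)
Definition in_beta' (n : option int) :=
  match n with
  | Some b => brk b
  | None => exists b, brk b /\ forall c, brk c -> c <= b
  end.

Definition lt_opt (c : int) (n : option int) :=
  match n with Some b => (c < b)%R | None => true end.

(* lo is n^- : largest element of beta' below n (None = -infinity) *)
Definition is_nminus (n lo : option int) :=
  match lo with
  | Some c => brk c /\ lt_opt c n /\ (forall c', brk c' -> lt_opt c' n -> c' <= c)
  | None => forall c', brk c' -> ~ lt_opt c' n
  end.

(* ---------- the modules (+)_{lo < a <= hi} (R/sigma^a(m0)) v_a ---------- *)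
Definition inI (lo hi : option int) (a : int) : bool :=
  (if lo is Some l then l < a else true) && (if hi is Some h then a <= h else true).

(* formal finite sums  sum r_i v_{a_i}  *)
Definition coef (x : seq (int * R)) (a : int) : R := \sum_(p <- x | p.1 == a) p.2.

Definition reln (lo hi : option int) (x y : seq (int * R)) : Prop :=
  forall a, inI lo hi a -> orb a (coef x a - coef y a).

Definition qcar (lo hi : option int) :=
  {S : seq (int * R) -> Prop | exists x, S = reln lo hi x}.

Definition cls (lo hi : option int) (x : seq (int * R)) : qcar lo hi :=
  exist _ (reln lo hi x) (ex_intro _ x erefl).

Definition rep (lo hi : option int) (q : qcar lo hi) : seq (int * R) :=
  proj1_sig (ClassicalEpsilon.constructive_indefinite_description _ (proj2_sig q)).

(* (r t^k) . (s v_a) = r sigma^k(s) v_{a+k}, which is 0 when a+k is outside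
   the interval (lo, hi] *)
Definition rawact (lo hi : option int) (k : int) (r : R) (x : seq (int * R)) :=
  [seq (p.1 + k, r * spow k p.2) | p <- x & inI lo hi p.1].

Definition MI (lo hi : option int) : bmod :=
  @BMod (qcar lo hi) (cls lo hi [::])
    (fun u w => cls lo hi (rep u ++ rep w))
    (fun u => cls lo hi [seq (p.1, - p.2) | p <- rep u])
    (fun k r u => cls lo hi (rawact lo hi k r (rep u))).

Definition MO : bmod := MI None None.
(* M(O, n) for n in beta', with lo = n^- *)
Definition MOn (lo n : option int) : bmod := MI lo n.
End BRalg.

(* Main.v *)
Require Import Defs.
From HB Require Import structures.
From mathcomp Require Import all_boot all_order all_algebra.
From mathcomp Require Import boolp zify ring.
From Stdlib Require List.
Set Implicit Arguments. Unset Strict Implicit. Unset Printing Implicit Defensive.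
Import Order.TTheory GRing.Theory Num.Theory.
Local Open Scope ring_scope.
Section Main.
Variable R : idomainType.
Variables (sigma : {rmorphism R -> R}) (sigmai : R -> R).
Hypotheses (Hs1 : cancel sigma sigmai) (Hs2 : cancel sigmai sigma).
Variables (H J : R -> Prop).
Hypotheses (HH : is_ideal H) (HJ : is_ideal J).
Variable m0 : R -> Prop.
Hypothesis Hm0 : is_max_ideal m0.
Hypothesis Hinf : orbit_infinite sigma sigmai m0.
Local Notation sp := (spow sigma sigmai).
Local Notation sg := (simg sigma sigmai).
Local Notation Jp := (Jprod sigma sigmai J).
Local Notation Hp := (Hprod sigma sigmai H).
Local Notation Ip := (Ipow sigma sigmai H J).
Local Notation orb := (orb sigma sigmai m0).
Local Notation brk := (brk sigma sigmai H J m0).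

Lemma sigmaiD x y : sigmai (x + y) = sigmai x + sigmai y.
Proof. apply: (can_inj Hs1). by rewrite rmorphD !Hs2. Qed.
Lemma sigmaiM x y : sigmai (x * y) = sigmai x * sigmai y.
Proof. apply: (can_inj Hs1). by rewrite rmorphM !Hs2. Qed.
Lemma sigmai1 : sigmai 1 = 1.
Proof. apply: (can_inj Hs1). by rewrite rmorph1 !Hs2. Qed.
Lemma sigmai0 : sigmai 0 = 0.
Proof. apply: (can_inj Hs1). by rewrite rmorph0 !Hs2. Qed.

Lemma spD n x y : sp n (x + y) = sp n x + sp n y.
Proof.
case: n => k /=; first by elim: k => //= k ->; rewrite rmorphD.
by elim: k => [|k IH] /=; rewrite ?sigmaiD // -/(iter _ _ _) IH sigmaiD.
Qed.
Lemma spM n x y : sp n (x * y) = sp n x * sp n y.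
Proof.
case: n => k /=; first by elim: k => //= k ->; rewrite rmorphM.
by elim: k => [|k IH] /=; rewrite ?sigmaiM // -/(iter _ _ _) IH sigmaiM.
Qed.
Lemma sp1 n : sp n 1 = 1.
Proof.
case: n => k /=; first by elim: k => //= k ->; rewrite rmorph1.
by elim: k => [|k IH] /=; rewrite ?sigmai1 // -/(iter _ _ _) IH sigmai1.
Qed.
Lemma sp0 n : sp n 0 = 0.
Proof.
case: n => k /=; first by elim: k => //= k ->; rewrite rmorph0.
by elim: k => [|k IH] /=; rewrite ?sigmai0 // -/(iter _ _ _) IH sigmai0.
Qed.
Lemma spN n x : sp n (- x) = - sp n x.
Proof. by apply/eqP; rewrite -subr_eq0 opprK -spD addNr sp0. Qed.
Lemma spB n x y : sp n (x - y) = sp n x - sp n y.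
Proof. by rewrite spD spN. Qed.
Lemma sp_0 x : sp 0 x = x. Proof. by []. Qed.

Lemma spS n x : sp (n + 1) x = sigma (sp n x).
Proof.
case: n => [k|[|k]].
- by have -> : (Posz k + 1) = Posz k.+1 by lia.
- by rewrite /= Hs2.
- have -> : Negz k.+1 + 1 = Negz k by rewrite !NegzE; lia.
  by rewrite /= Hs2.
Qed.
Lemma spP n x : sp (n - 1) x = sigmai (sp n x).
Proof. by rewrite -{2}(subrK 1 n) spS Hs1. Qed.

Lemma spA n m x : sp n (sp m x) = sp (n + m) x.
Proof.
case: n => k.
  elim: k => [|k IH]; first by rewrite add0r.
  have -> : Posz k.+1 + m = (Posz k + m) + 1 by lia.
  by rewrite spS -IH.
elim: k => [|k IH].
  by rewrite /= -spP; congr sp; rewrite NegzE; lia.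
have -> : Negz k.+1 + m = (Negz k + m) - 1 by rewrite !NegzE; lia.
by rewrite spP -IH.
Qed.

Lemma spK n x : sp (- n) (sp n x) = x.
Proof. by rewrite spA addNr. Qed.
Lemma spKV n x : sp n (sp (- n) x) = x.
Proof. by rewrite spA addrN. Qed.

Lemma sp_sum I (s : seq I) (F : I -> R) n :
  sp n (\sum_(i <- s) F i) = \sum_(i <- s) sp n (F i).
Proof. elim: s => [|a s IH]; by rewrite ?big_nil ?sp0 // !big_cons spD IH. Qed.

Lemma ideal0 (I : R -> Prop) : is_ideal I -> I 0. Proof. by case. Qed.
Lemma idealD (I : R -> Prop) x y : is_ideal I -> I x -> I y -> I (x + y).
Proof. by case=> _ [] h _; apply: h. Qed.
Lemma idealMl (I : R -> Prop) r x : is_ideal I -> I x -> I (r * x).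
Proof. by case=> _ [] _ h; apply: h. Qed.
Lemma idealMr (I : R -> Prop) r x : is_ideal I -> I x -> I (x * r).
Proof. by move=> hI hx; rewrite mulrC; apply: idealMl. Qed.
Lemma idealN (I : R -> Prop) x : is_ideal I -> I x -> I (- x).
Proof. by move=> hI hx; rewrite -mulN1r; apply: idealMl. Qed.
Lemma idealB (I : R -> Prop) x y : is_ideal I -> I x -> I y -> I (x - y).
Proof. by move=> hI hx hy; apply: idealD => //; apply: idealN. Qed.
Lemma ideal_sum (I : R -> Prop) (T : Type) (s : seq T) (F : T -> R) : is_ideal I ->
  (forall t, List.In t s -> I (F t)) -> I (\sum_(t <- s) F t).
Proof.
move=> hI; elim: s => [|a s IH] h; first by rewrite big_nil; apply: ideal0.
rewrite big_cons; apply: idealD => //; first by apply: h; left.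
by apply: IH => t ht; apply: h; right.
Qed.

Lemma simg_ideal n (I : R -> Prop) : is_ideal I -> is_ideal (simg sigma sigmai n I).
Proof.
move=> hI; split; first by rewrite /simg sp0; apply: ideal0.
split=> [x y|r x]; rewrite /simg ?spD ?spM => *.
  by apply: idealD.
by apply: idealMl.
Qed.

Lemma simgK n m (I : R -> Prop) x : simg sigma sigmai n (simg sigma sigmai m I) x = simg sigma sigmai (n + m) I x.
Proof. by rewrite /simg spA; congr I; congr sp; lia. Qed.
Lemma simg_sp n (I : R -> Prop) x : simg sigma sigmai n I (sp n x) = I x.
Proof. by rewrite /simg spK. Qed.

Lemma max_inv (m : R -> Prop) c : is_max_ideal m -> ~ m c -> exists d, m (d * c - 1).
Proof.
case=> hm [] h1 hmax hc.
pose K := fun x => exists y z, m z /\ x = y * c + z.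
have hK : is_ideal K.
  split; first by exists 0, 0; split; [apply: ideal0|rewrite mul0r addr0].
  split=> [x y [y1 [z1 [h1' ->]]] [y2 [z2 [h2' ->]]]|r x [y1 [z1 [h1' ->]]]].
    exists (y1 + y2), (z1 + z2); split; first by apply: idealD.
    by rewrite mulrDl; ring.
  exists (r * y1), (r * z1); split; first by apply: idealMl.
  by ring.
case: (hmax K hK).
- by move=> x hx; exists 0, x; split => //; rewrite mul0r add0r.
- by move=> hKm; exfalso; apply: hc; apply: hKm; exists 1, 0; split;
    [apply: ideal0|rewrite mul1r addr0].
- case=> y [z [hz e]]; exists y.
  have -> : y * c - 1 = - z by rewrite e; ring.
  by apply: idealN.
Qed.

Lemma max_prime (m : R -> Prop) : is_max_ideal m -> is_prime_ideal m.
Proof.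
move=> hm; have [hI [h1 _]] := hm; split => //; split => // x y hxy.
case: (pselect (m x)) => hx; [by left|right].
have [d hd] := max_inv hm hx.
have -> : y = d * (x * y) - (d * x - 1) * y by ring.
by apply: idealB => //; [apply: idealMl|apply: idealMr].
Qed.

Lemma simg_max n (I : R -> Prop) : is_max_ideal I -> is_max_ideal (simg sigma sigmai n I).
Proof.
case=> hI [h1 hmax]; split; first by apply: simg_ideal.
split; first by rewrite /simg sp1.
move=> K hK hIK.
case: (hmax (simg sigma sigmai (- n) K) (simg_ideal _ hK)).
- move=> x hx; rewrite /simg opprK; apply: hIK; by rewrite /simg spK.
- move=> h; left => x hx; rewrite /simg; apply: h.
  by rewrite /simg opprK spKV.
- by rewrite /simg sp1; right.
Qed.

Lemma idprod_subl (I K : R -> Prop) : is_ideal I -> incl (idprod I K) I.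
Proof.
move=> hI x [s [hs ->]]; apply: ideal_sum => // p hp.
have := proj1 (List.Forall_forall _ s) hs p hp; case=> h _; by apply: idealMr.
Qed.
Lemma idprod_subr (I K : R -> Prop) : is_ideal K -> incl (idprod I K) K.
Proof.
move=> hK x [s [hs ->]]; apply: ideal_sum => // p hp.
have := proj1 (List.Forall_forall _ s) hs p hp; case=> _ h; by apply: idealMl.
Qed.
Lemma idprod_mul (I K : R -> Prop) x y : I x -> K y -> idprod I K (x * y).
Proof. by move=> hx hy; exists [:: (x, y)]; split; [constructor|rewrite big_seq1]. Qed.
Lemma idprod_ideal (I K : R -> Prop) : is_ideal I -> is_ideal (idprod I K).
Proof.
move=> hI; split; first by exists [::]; rewrite big_nil.
split.
  move=> x y [s1 [h1 ->]] [s2 [h2 ->]]; exists (s1 ++ s2); split.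
    by apply/List.Forall_app.
  by rewrite big_cat.
move=> r x [s [hs ->]]; exists (map (fun p => (r * p.1, p.2)) s); split.
  apply/List.Forall_forall => p /(List.in_map_iff) [q [<- hq]] /=.
  have [h1 h2] := proj1 (List.Forall_forall _ s) hs q hq; split => //.
  by apply: idealMl.
by rewrite big_map mulr_sumr; apply: eq_bigr => p _; rewrite mulrA.
Qed.
Lemma idprod_mono (I K : R -> Prop) I' K' : incl I I' -> incl K K' -> incl (idprod I K) (idprod I' K').
Proof.
move=> hI hK x [s [hs ->]]; exists s; split => //.
by apply: List.Forall_impl hs => p [] *; split; [apply: hI|apply: hK].
Qed.
Lemma idprod_lmul (A B1 B2 C : R -> Prop) x y :
  (forall a b, A a -> B1 b -> C (a * b)) -> A x -> idprod B1 B2 y -> idprod C B2 (x * y).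
Proof.
move=> hABC hx [s [hs ->]]; exists (map (fun p => (x * p.1, p.2)) s); split.
  apply/List.Forall_forall => p /(List.in_map_iff) [q [<- hq]] /=.
  have [h1 h2] := proj1 (List.Forall_forall _ s) hs q hq; split => //.
  by apply: hABC.
by rewrite big_map mulr_sumr; apply: eq_bigr => p _; rewrite mulrA.
Qed.
Lemma simg_idprod n (I K : R -> Prop) :
  incl (idprod (simg sigma sigmai n I) (simg sigma sigmai n K)) (simg sigma sigmai n (idprod I K)).
Proof.
move=> x [s [hs ->]]; rewrite /simg.
exists (map (fun p => (sp (- n) p.1, sp (- n) p.2)) s); split.
  apply/List.Forall_forall => p /(List.in_map_iff) [q [<- hq]] /=.
  by have [h1 h2] := proj1 (List.Forall_forall _ s) hs q hq.
by rewrite sp_sum big_map; apply: eq_bigr => p _; rewrite spM.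
Qed.
Lemma simg_idprod' n (I K : R -> Prop) :
  incl (simg sigma sigmai n (idprod I K)) (idprod (simg sigma sigmai n I) (simg sigma sigmai n K)).
Proof.
move=> x; rewrite {1}/simg => -[s [hs e]].
exists (map (fun p => (sp n p.1, sp n p.2)) s); split.
  apply/List.Forall_forall => p /(List.in_map_iff) [q [<- hq]] /=.
  have [h1 h2] := proj1 (List.Forall_forall _ s) hs q hq.
  by rewrite !simg_sp.
rewrite -(spKV n x) e sp_sum big_map; apply: eq_bigr => p _; by rewrite spM.
Qed.

Lemma prime_notin (P I K : R -> Prop) : is_prime_ideal P ->
  (exists x, I x /\ ~ P x) -> (exists y, K y /\ ~ P y) -> exists z, idprod I K z /\ ~ P z.
Proof.
move=> [_ [_ hP]] [x [hx nx]] [y [hy ny]]; exists (x * y); split.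
  by apply: idprod_mul.
by case/hP.
Qed.

Lemma True_ideal : is_ideal (fun _ : R => True).
Proof. by split => //. Qed.

Lemma Jprod_ideal k : is_ideal (Jp k).
Proof. elim: k => [|k IH]; [exact: True_ideal|exact: idprod_ideal]. Qed.
Lemma Hprod_ideal k : is_ideal (Hp k).
Proof. elim: k => [|k IH]; [exact: True_ideal|exact: idprod_ideal]. Qed.
Lemma Ipow_ideal n : is_ideal (Ip n).
Proof. case: n => k; [exact: Jprod_ideal|exact: Hprod_ideal]. Qed.

Lemma Jprod_factor k x i : Jp k x -> (i < k)%N -> sg i J x.
Proof.
elim: k x => // k IH x /= hx; rewrite ltnS leq_eqVlt => /orP [/eqP ->|hi].
  by apply: (idprod_subr _ hx); apply: simg_ideal.
by apply: IH => //; apply: (idprod_subl (Jprod_ideal k) hx).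
Qed.
Lemma Hprod_factor k x i : Hp k x -> (i < k)%N -> sg (Negz i) H x.
Proof.
elim: k x => // k IH x /= hx; rewrite ltnS leq_eqVlt => /orP [/eqP ->|hi].
  by apply: (idprod_subr _ hx); apply: simg_ideal.
by apply: IH => //; apply: (idprod_subl (Hprod_ideal k) hx).
Qed.
Lemma Jprod_mono j k : (j <= k)%N -> incl (Jp k) (Jp j).
Proof.
move/subnK <-; elim: (k - j)%N => // d IH x hx; apply: IH.
by rewrite addSn in hx; apply: (idprod_subl (Jprod_ideal _) hx).
Qed.
Lemma Hprod_mono j k : (j <= k)%N -> incl (Hp k) (Hp j).
Proof.
move/subnK <-; elim: (k - j)%N => // d IH x hx; apply: IH.
by rewrite addSn in hx; apply: (idprod_subl (Hprod_ideal _) hx).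
Qed.

Lemma Jprod_shift p q : incl (Jp (p + q)) (sg p (Jp q)).
Proof.
elim: q => [|q IH] x; first by rewrite /simg.
rewrite addnS /= => hx; apply: simg_idprod.
move: hx; apply: idprod_mono; first exact: IH.
move=> y hy; rewrite simgK; move: hy; congr (sg _ J y); lia.
Qed.
Lemma Hprod_shift p q : incl (Hp (p + q)) (sg (- p%:Z) (Hp q)).
Proof.
elim: q => [|q IH] x; first by rewrite /simg.
rewrite addnS /= => hx; apply: simg_idprod.
move: hx; apply: idprod_mono; first exact: IH.
move=> y hy; rewrite simgK; move: hy; congr (sg _ H y); rewrite !NegzE; lia.
Qed.

Lemma Jprod_mul n m r s : Jp n r -> sg n (Jp m) s -> Jp (n + m) (r * s).
Proof.
elim: m r s => [|m IH] r s hr.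
  by rewrite addn0 => _; apply: idealMr => //; apply: Jprod_ideal.
move=> /simg_idprod' hs; rewrite addnS /=.
have := idprod_lmul IH hr hs; apply: idprod_mono => // y.
by rewrite simgK; congr (sg _ J y); lia.
Qed.
Lemma Hprod_mul p q r s : Hp p r -> sg (- p%:Z) (Hp q) s -> Hp (p + q) (r * s).
Proof.
elim: q r s => [|q IH] r s hr.
  by rewrite addn0 => _; apply: idealMr => //; apply: Hprod_ideal.
move=> /simg_idprod' hs; rewrite addnS /=.
have := idprod_lmul IH hr hs; apply: idprod_mono => // y.
by rewrite simgK; congr (sg _ H y); rewrite !NegzE; lia.
Qed.

Lemma Ipow_pos k : Ip (Posz k) = Jp k. Proof. by []. Qed.
Lemma Ipow_neg k : Ip (Negz k) = Hp k.+1. Proof. by []. Qed.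

Lemma Ipow_mul n m r s : Ip n r -> Ip m s -> Ip (n + m) (r * sp n s).
Proof.
case: n => a; case: m => b hr hs; rewrite ?Ipow_pos ?Ipow_neg in hr hs.
- have -> : Posz a + Posz b = Posz (a + b) by lia.
  by rewrite Ipow_pos; apply: Jprod_mul => //; rewrite simg_sp.
- case: (leqP b.+1 a) => hab.
    have -> : Posz a + Negz b = Posz (a - b.+1) by rewrite NegzE; lia.
    rewrite Ipow_pos; apply: idealMr; first exact: Jprod_ideal.
    by apply: (Jprod_mono _ hr); lia.
  have -> : Posz a + Negz b = Negz (b - a) by rewrite !NegzE; lia.
  rewrite Ipow_neg; apply: idealMl; first exact: Hprod_ideal.
  have e : b.+1 = (a + (b - a).+1)%N by lia.
  rewrite e in hs; have := Hprod_shift hs; by rewrite /simg opprK.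
- case: (leqP a.+1 b) => hab.
    have -> : Negz a + Posz b = Posz (b - a.+1) by rewrite NegzE; lia.
    rewrite Ipow_pos; apply: idealMl; first exact: Jprod_ideal.
    have e : b = (a.+1 + (b - a.+1))%N by lia.
    rewrite e in hs; have := Jprod_shift hs; rewrite /simg.
    by congr (Jp _ (sp _ s)); rewrite NegzE.
  have -> : Negz a + Posz b = Negz (a - b) by rewrite !NegzE; lia.
  rewrite Ipow_neg; apply: idealMr; first exact: Hprod_ideal.
  by apply: (Hprod_mono _ hr); lia.
- have -> : Negz a + Negz b = Negz (a.+1 + b) by rewrite !NegzE; lia.
  rewrite Ipow_neg; have -> : (a.+1 + b).+1 = (a.+1 + b.+1)%N by lia.
  apply: Hprod_mul => //; rewrite /simg opprK spA.
  by have -> : Posz a.+1 + Negz a = 0 by rewrite NegzE; lia.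
Qed.

Lemma Jprod_notin (P : R -> Prop) k : is_prime_ideal P ->
  (forall i, (i < k)%N -> exists x, sg i J x /\ ~ P x) -> exists x, Jp k x /\ ~ P x.
Proof.
move=> hP; elim: k => [|k IH] h; first by exists 1; split => //; case: hP => _ [].
apply: prime_notin => //; first by apply: IH => i hi; apply: h; lia.
by apply: h.
Qed.
Lemma Hprod_notin (P : R -> Prop) k : is_prime_ideal P ->
  (forall i, (i < k)%N -> exists x, sg (Negz i) H x /\ ~ P x) -> exists x, Hp k x /\ ~ P x.
Proof.
move=> hP; elim: k => [|k IH] h; first by exists 1; split => //; case: hP => _ [].
apply: prime_notin => //; first by apply: IH => i hi; apply: h; lia.
by apply: h.
Qed.


Lemma int_nat (z : int) : 0 <= z -> exists k : nat, z = Posz k.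
Proof. by case: z => [k|k] // _; exists k. Qed.

Lemma orb_max a : is_max_ideal (orb a). Proof. exact: simg_max. Qed.
Lemma orb_prime a : is_prime_ideal (orb a). Proof. exact/max_prime/orb_max. Qed.
Lemma orb_ideal a : is_ideal (orb a). Proof. by case: (orb_max a). Qed.
Lemma orb_not1 a : ~ orb a 1. Proof. by case: (orb_max a) => _ []. Qed.

Lemma orb_sp b k y : orb b y -> orb (b + k) (sp k y).
Proof. by rewrite /Defs.orb /simg spA; congr (m0 (sp _ y)); lia. Qed.
Lemma orb_sp' b k y : orb (b + k) (sp k y) -> orb b y.
Proof. by rewrite /Defs.orb /simg spA; congr (m0 (sp _ y)); lia. Qed.
Lemma orb_spE b c k y : c = b + k -> orb c (sp k y) = orb b y.
Proof. by move=> ->; rewrite /Defs.orb /simg spA; congr (m0 (sp _ y)); lia. Qed.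

Lemma simg1_orb a x : sg 1 (orb a) x = orb (a + 1) x.
Proof. by rewrite /Defs.orb simgK addrC. Qed.

Lemma brk_HJ a h j : brk a -> H h -> J j -> orb (a + 1) (h * j).
Proof.
case=> _ hi hh hj; rewrite -simg1_orb; apply: hi; exact: idprod_mul.
Qed.

Lemma nbrk_J a : ~ brk a -> exists j, J j /\ ~ orb (a + 1) j.
Proof.
move=> nb; case: (pselect (exists j, J j /\ ~ orb (a + 1) j)) => // hne.
exfalso; apply: nb; split; first by apply/max_prime/simg_max/orb_max.
move=> x /(idprod_subr HJ) hx; rewrite simg1_orb.
by case: (pselect (orb (a + 1) x)) => // hn; exfalso; apply: hne; exists x.
Qed.
Lemma nbrk_H a : ~ brk a -> exists h, H h /\ ~ orb (a + 1) h.
Proof.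
move=> nb; case: (pselect (exists j, H j /\ ~ orb (a + 1) j)) => // hne.
exfalso; apply: nb; split; first by apply/max_prime/simg_max/orb_max.
move=> x /(idprod_subl HH) hx; rewrite simg1_orb.
by case: (pselect (orb (a + 1) x)) => // hn; exfalso; apply: hne; exists x.
Qed.

Lemma orb_inj a b : orb a = orb b -> a = b.
Proof.
move=> E; apply/eqP; apply/negPn/negP => nab.
pose p := b - a.
have per1 c : orb (c + p) = orb c.
  apply: funext => x.
  have := congr1 (fun f => f (sp (a - c) x)) E; rewrite /Defs.orb /simg !spA.
  move=> e; have -> : - (c + p) = - b + (a - c) by rewrite /p; lia.
  by rewrite -e; congr (m0 (sp _ x)); lia.
pose P := `|p|%N.
have P0 : (0 < P)%N by rewrite /P absz_gt0 /p subr_eq0 eq_sym.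
have per2 c : orb (c + P%:Z) = orb c.
  rewrite /P; case: (leP 0 p) => hp.
    by rewrite gez0_abs // per1.
  rewrite ltz0_abs // -{2}(subrK p c) per1; congr orb; lia.
have per3 (n : nat) c : orb (c + (n * P)%N%:Z) = orb c.
  elim: n c => [|n IH] c; first by rewrite mul0n addr0.
  by rewrite mulSn PoszD addrA IH per2.
have per4 (q : int) c : orb (c + q * P%:Z) = orb c.
  case: q => n; first by rewrite -PoszM per3.
  by rewrite -(per3 n.+1 (c + Negz n * P%:Z)); congr orb; rewrite NegzE; lia.
apply: Hinf; exists (List.map (fun i : nat => orb (Posz i)) (List.seq 0 P)) => c.
have hm0 : 0 <= (c %% P%:Z)%Z by apply: modz_ge0; lia.
have hm1 : (c %% P%:Z)%Z < P%:Z by apply: ltz_pmod; lia.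
have [i ei] := int_nat hm0.
apply/List.in_map_iff; exists i; split.
  by rewrite -ei {2}(divz_eq c P%:Z) [in RHS]addrC per4.
apply/List.in_seq; rewrite ei in hm1; lia.
Qed.

Lemma orb_neq a b : a <> b -> exists x, orb a x /\ ~ orb b x.
Proof.
move=> nab; case: (pselect (exists x, orb a x /\ ~ orb b x)) => // hne.
exfalso; apply: nab; apply: orb_inj.
have hab : incl (orb a) (orb b).
  move=> x hx; case: (pselect (orb b x)) => // hn; exfalso; apply: hne; by exists x.
have [_ [_ hmax]] := orb_max a.
case: (hmax (orb b) (orb_ideal b) hab) => [hba|/orb_not1 //].
by apply: funext => x; apply: propext; split; [apply: hab|apply: hba].
Qed.

Lemma BRK lo hi (Hlo : forall c, lo = Some c -> brk c) (Hhi : forall b, hi = Some b -> brk b)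
  a b c n m r s : b = a + m -> c = b + n -> inI lo hi a -> ~~ inI lo hi b -> inI lo hi c ->
  Ip n r -> Ip m s -> orb c (r * sp n s).
Proof.
move=> eb ec Ha Hb Hc hr hs.
have [[c0 [elo [h1 [h2 h3]]]]|[b0 [ehi [h1 [h2 h3]]]]] :
  (exists c0, lo = Some c0 /\ b <= c0 /\ c0 < a /\ c0 < c) \/
  (exists b0, hi = Some b0 /\ b0 < b /\ a <= b0 /\ c <= b0).
  move: Ha Hb Hc; rewrite /inI; case: lo Hlo => [c0|] _; case: hi Hhi => [b0|] _ /=;
    rewrite ?andbT ?andTb.
  - move=> /andP [h1 h2] /nandP [h3|h3] /andP [h4 h5].
      by left; exists c0; split => //; lia.
    by right; exists b0; split => //; lia.
  - by move=> h1 h3 h4; left; exists c0; split => //; lia.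
  - by move=> h1 h3 h4; right; exists b0; split => //; lia.
  - by [].
- (* crossing the lower boundary c0 *)
  have hb := Hlo c0 elo.
  case: m eb hs => [mm|mm] eb hs; first by exfalso; lia.
  case: n ec hr => [nn|nn] ec hr; last by exfalso; rewrite NegzE in ec; lia.
  rewrite Ipow_pos in hr; rewrite Ipow_neg in hs.
  have [ee eee] : exists k : nat, c - c0 - 1 = Posz k by apply: int_nat; lia.
  have [ll ell] : exists k : nat, c0 - b = Posz k by apply: int_nat; lia.
  have hJ : sg ee J r by apply: (Jprod_factor hr); rewrite NegzE in eb; lia.
  have hH : sg (Negz ll) H s by apply: (Hprod_factor hs); rewrite NegzE in eb; lia.
  rewrite /simg in hH hJ; have X := brk_HJ hb hH hJ.
  apply: (orb_sp' (k := c0 + 1 - c)).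
  have -> : c + (c0 + 1 - c) = c0 + 1 by lia.
  suff -> : sp (c0 + 1 - c) (r * sp nn s) = sp (- Negz ll) s * sp (- Posz ee) r by [].
  by rewrite spM spA mulrC; congr (sp _ s * sp _ r); rewrite ?NegzE in eb *; lia.
- (* crossing the upper boundary b0 *)
  have hb := Hhi b0 ehi.
  case: m eb hs => [mm|mm] eb hs; last by exfalso; rewrite NegzE in eb; lia.
  case: n ec hr => [nn|nn] ec hr; first by exfalso; lia.
  rewrite Ipow_neg in hr; rewrite Ipow_pos in hs.
  have [ii eii] : exists k : nat, b0 - c = Posz k by apply: int_nat; lia.
  have [jj ejj] : exists k : nat, b - b0 - 1 = Posz k by apply: int_nat; lia.
  have hH : sg (Negz ii) H r by apply: (Hprod_factor hr); rewrite NegzE in ec; lia.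
  have hJ : sg jj J s by apply: (Jprod_factor hs); lia.
  rewrite /simg in hH hJ; have X := brk_HJ hb hH hJ.
  apply: (orb_sp' (k := b0 + 1 - c)).
  have -> : c + (b0 + 1 - c) = b0 + 1 by lia.
  suff -> : sp (b0 + 1 - c) (r * sp (Negz nn) s) = sp (- Negz ii) r * sp (- Posz jj) s by [].
  by rewrite spM spA; congr (sp _ r * sp _ s); rewrite ?NegzE in ec *; lia.
Qed.

Section MIsec.
Variables lo hi : option int.
Hypothesis Hlo : forall c, lo = Some c -> brk c.
Hypothesis Hhi : forall b, hi = Some b -> brk b.
Hypothesis Hin : forall a, inI lo hi a -> inI lo hi (a + 1) -> ~ brk a.
Hypothesis Hne : exists a, inI lo hi a.
Local Notation I := (inI lo hi).
Local Notation MIq := (MI sigma sigmai m0 lo hi).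
Local Notation cls := (cls sigma sigmai m0 lo hi).
Local Notation rep := (rep (sigma:=sigma) (sigmai:=sigmai) (m0:=m0) (lo:=lo) (hi:=hi)).
Local Notation reln := (reln sigma sigmai m0 lo hi).
Local Notation rawact := (rawact sigma sigmai lo hi).
Local Notation negs x := [seq (p.1, - p.2) | p <- x].

Lemma coef_nil a : coef ([::] : seq (int * R)) a = 0.
Proof. by rewrite /coef big_nil. Qed.
Lemma coef_cons (p : int * R) x a : coef (p :: x) a = (if p.1 == a then p.2 else 0) + coef x a.
Proof. by rewrite /coef big_cons; case: ifP; rewrite ?add0r. Qed.
Lemma coef_cat (x y : seq (int * R)) a : coef (x ++ y) a = coef x a + coef y a.
Proof. by rewrite /coef big_cat. Qed.
Lemma coef_neg (x : seq (int * R)) a : coef (negs x) a = - coef x a.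
Proof.
elim: x => [|p x IH] /=; first by rewrite !coef_nil oppr0.
by rewrite !coef_cons IH opprD /=; case: ifP; rewrite ?oppr0.
Qed.
Lemma coef_seq1 b (c : R) a : coef [:: (b, c)] a = if b == a then c else 0.
Proof. by rewrite coef_cons coef_nil addr0. Qed.

Lemma rawact_cons k r p x :
  rawact k r (p :: x) = if I p.1 then (p.1 + k, r * sp k p.2) :: rawact k r x else rawact k r x.
Proof. by rewrite /Defs.rawact /=; case: ifP. Qed.
Lemma rawact_cat k r x y : rawact k r (x ++ y) = rawact k r x ++ rawact k r y.
Proof. by rewrite /Defs.rawact filter_cat map_cat. Qed.

Lemma coef_raw k r x a :
  coef (rawact k r x) a = if I (a - k) then r * sp k (coef x (a - k)) else 0.
Proof.
elim: x => [|p x IH]; first by rewrite /Defs.rawact /= coef_nil; case: ifP; rewrite // coef_nil sp0 mulr0.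
rewrite rawact_cons coef_cons.
have E : (p.1 + k == a) = (p.1 == a - k).
  by apply/idP/idP => /eqP e; apply/eqP; lia.
case: ifP => hp.
  rewrite coef_cons IH /= E; case: eqP => [e|_].
    by rewrite -e hp spD mulrDr.
  by rewrite !add0r.
rewrite IH; case: eqP => [e|_]; last by rewrite !add0r.
by rewrite -e hp.
Qed.

Lemma reln_coef x y : (forall a, I a -> coef x a = coef y a) -> reln x y.
Proof. by move=> h a ha; rewrite h // subrr; apply: ideal0; apply: orb_ideal. Qed.
Lemma reln_refl x : reln x x. Proof. exact: reln_coef. Qed.
Lemma reln_sym x y : reln x y -> reln y x.
Proof.
move=> h a ha; rewrite -opprB; apply: idealN; [exact: orb_ideal|exact: h].
Qed.
Lemma reln_trans x y z : reln x y -> reln y z -> reln x z.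
Proof.
move=> h1 h2 a ha; rewrite (_ : coef x a - coef z a = (coef x a - coef y a) + (coef y a - coef z a));
  last by ring.
by apply: idealD; [exact: orb_ideal|exact: h1|exact: h2].
Qed.

Lemma cls_eq x y : reln x y -> cls x = cls y.
Proof.
move=> h; apply: eq_exist; apply: funext => z; apply: propext; split => hz.
  exact: reln_trans (reln_sym h) hz.
exact: reln_trans h hz.
Qed.
Lemma cls_inj x y : cls x = cls y -> reln x y.
Proof.
move=> /(congr1 (@proj1_sig _ _)) /= e.
by rewrite e; apply: reln_refl.
Qed.
Lemma clsK u : cls (rep u) = u.
Proof.
move: u => [S pS]; rewrite /Defs.rep /=.
case: (ClassicalEpsilon.constructive_indefinite_description _ _) => x e /=.
by apply: eq_exist; rewrite e.
Qed.
Lemma rep_cls x : reln (rep (cls x)) x.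
Proof. by apply: cls_inj; rewrite clsK. Qed.
Lemma cls_surj (u : mcar MIq) : exists x, u = cls x.
Proof. by exists (rep u); rewrite clsK. Qed.

Lemma reln_cat x x' y y' : reln x x' -> reln y y' -> reln (x ++ y) (x' ++ y').
Proof.
move=> h1 h2 a ha; rewrite !coef_cat.
rewrite (_ : _ - _ = (coef x a - coef x' a) + (coef y a - coef y' a)); last by ring.
by apply: idealD; [exact: orb_ideal|exact: h1|exact: h2].
Qed.
Lemma reln_neg x x' : reln x x' -> reln (negs x) (negs x').
Proof.
move=> h a ha; rewrite !coef_neg -opprD; apply: idealN; [exact: orb_ideal|exact: h].
Qed.
Lemma reln_raw k r x x' : reln x x' -> reln (rawact k r x) (rawact k r x').
Proof.
move=> h a ha; rewrite !coef_raw; case: ifP => hi'; last by rewrite subrr; apply: ideal0; apply: orb_ideal.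
rewrite -mulrBr -spB; apply: idealMl; first exact: orb_ideal.
by rewrite (orb_spE (b := a - k)); [apply: h|lia].
Qed.

Lemma madd_cls x y : @madd _ MIq (cls x) (cls y) = cls (x ++ y).
Proof. by apply: cls_eq; apply: reln_cat; apply: rep_cls. Qed.
Lemma mopp_cls x : @mopp _ MIq (cls x) = cls (negs x).
Proof. by apply: cls_eq; apply: reln_neg; apply: rep_cls. Qed.
Lemma mact_cls k r x : @mact _ MIq k r (cls x) = cls (rawact k r x).
Proof. by apply: cls_eq; apply: reln_raw; apply: rep_cls. Qed.
Lemma mzero_cls : mzero MIq = cls [::]. Proof. by []. Qed.

Lemma MI_bmod : is_bmod sigma sigmai H J MIq.
Proof.
split.
  move=> u v w; have [x ->] := cls_surj u; have [y ->] := cls_surj v; have [z ->] := cls_surj w.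
  by rewrite !madd_cls catA.
split.
  move=> u v; have [x ->] := cls_surj u; have [y ->] := cls_surj v.
  by rewrite !madd_cls; apply: cls_eq; apply: reln_coef => a _; rewrite !coef_cat addrC.
split.
  by move=> u; have [x ->] := cls_surj u; rewrite mzero_cls madd_cls.
split.
  move=> u; have [x ->] := cls_surj u; rewrite mopp_cls madd_cls mzero_cls.
  by apply: cls_eq; apply: reln_coef => a _; rewrite coef_cat coef_neg coef_nil addNr.
split.
  move=> n r u v _; have [x ->] := cls_surj u; have [y ->] := cls_surj v.
  by rewrite (madd_cls x y) !mact_cls madd_cls rawact_cat.
split.
  move=> n r s u _ _; have [x ->] := cls_surj u.
  rewrite !mact_cls madd_cls; apply: cls_eq; apply: reln_coef => a _.
  by rewrite coef_cat !coef_raw; case: ifP; rewrite ?addr0 // mulrDl.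
split.
  move=> n m r s u hr hs; have [x ->] := cls_surj u.
  rewrite !mact_cls; apply: cls_eq => c hc.
  rewrite !coef_raw.
  have e1 : c - n - m = c - (n + m) by lia.
  rewrite -e1.
  case: (boolP (I (c - n))) => h1; case: (boolP (I (c - n - m))) => h2.
  - by rewrite spM spA mulrA subrr; apply: ideal0; apply: orb_ideal.
  - by rewrite sp0 mulr0 subrr; apply: ideal0; apply: orb_ideal.
  - rewrite sub0r; apply: idealN; first exact: orb_ideal.
    apply: idealMr; first exact: orb_ideal.
    apply: (BRK Hlo Hhi (a := c - n - m) (b := c - n) (m := m) (n := n)) => //; lia.
  - by rewrite subrr; apply: ideal0; apply: orb_ideal.
move=> u; have [x ->] := cls_surj u; rewrite mact_cls; apply: cls_eq.
by apply: reln_coef => a ha; rewrite coef_raw subr0 ha mul1r.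
Qed.


Local Notation wsp := (@wspace _ MIq).

Lemma Lmap (A B : Type) (f : A -> B) (s : seq A) : List.map f s = map f s.
Proof. by elim: s => //= a s ->. Qed.

Lemma coef_flatten (xs : seq (seq (int * R))) a : coef (flatten xs) a = \sum_(y <- xs) coef y a.
Proof. elim: xs => [|y xs IH] /=; by rewrite ?coef_nil ?big_nil // coef_cat big_cons IH. Qed.

Lemma coef_notin (x : seq (int * R)) a : a \notin map fst x -> coef x a = 0.
Proof.
elim: x => [|p x IH] /=; first by rewrite coef_nil.
rewrite in_cons negb_or => /andP [h1 h2]; rewrite coef_cons IH //.
by case: eqP => [e|]; [rewrite e eqxx in h1|rewrite addr0].
Qed.

Lemma sum_pick (L : seq int) (F : int -> R) a : uniq L ->
  \sum_(b <- L) (if b == a then F b else 0) = if a \in L then F a else 0.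
Proof.
move=> uL; case: ifP => h.
  rewrite (bigD1_seq a) //= eqxx big1 ?addr0 // => b /negPf ->; by [].
by rewrite big1_seq // => b /andP [_ hb]; case: eqP => // e; rewrite -e hb in h.
Qed.

Lemma msum_cls (xs : seq (seq (int * R))) :
  @msum _ MIq (List.map cls xs) = cls (flatten xs).
Proof.
elim: xs => [|y xs IH] //.
have -> : @msum _ MIq (List.map cls (y :: xs)) = @madd _ MIq (cls y) (@msum _ MIq (List.map cls xs)) by [].
by rewrite IH madd_cls.
Qed.

Lemma ideal_orb0 a : orb a 0. Proof. apply: ideal0; exact: orb_ideal. Qed.

Lemma W1 a c : wsp (orb a) (cls [:: (a, c)]).
Proof.
move=> q hq; rewrite mact_cls mzero_cls; apply: cls_eq => a' ha'.
rewrite coef_raw coef_nil !subr0 ha' coef_seq1; case: eqP => [<-|_].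
  by rewrite sp_0; apply: idealMr => //; apply: orb_ideal.
by rewrite sp0 mulr0; apply: ideal_orb0.
Qed.

Lemma W2 (m : R -> Prop) x a : is_max_ideal m -> wsp m (cls x) -> I a -> ~ orb a (coef x a) -> m = orb a.
Proof.
move=> hm hw ha hn.
have hsub : incl m (orb a).
  move=> q hq; have := hw q hq; rewrite mact_cls mzero_cls => /cls_inj /(_ a ha).
  rewrite coef_raw subr0 ha coef_nil subr0 sp_0.
  by case/(proj2 (proj2 (orb_prime a))).
have [_ [_ hmax]] := hm.
case: (hmax (orb a) (orb_ideal a) hsub) => [hs|/orb_not1 //].
by apply: funext => y; apply: propext; split; [apply: hsub|apply: hs].
Qed.

Lemma MI_weight : is_weight MIq.
Proof.
split.
  move=> v; have [x ->] := cls_surj v.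
  pose L := undup (map fst x).
  exists (List.map (fun a => (orb a, cls [:: (a, coef x a)])) L); split.
    apply/List.Forall_forall => p /List.in_map_iff [a [<- _]] /=; split; [exact: orb_max|exact: W1].
  rewrite List.map_map /= -(List.map_map (fun a => [:: (a, coef x a)]) cls) msum_cls.
  apply: cls_eq; apply: reln_coef => a _.
  rewrite coef_flatten Lmap big_map.
  under eq_bigr do rewrite coef_seq1.
  rewrite sum_pick ?undup_uniq // mem_undup.
  by case: ifP => // /negbT /coef_notin.
split.
  move=> s; elim: s => [|[m v] s IH] hnd hF hsum; first by constructor.
  move: hnd => /List.NoDup_cons_iff [hm hnd]; move: hF => /List.Forall_cons_iff [[hmax hw] hF].
  have e : List.map snd ((m, v) :: s) = List.map cls (List.map (fun p => rep p.2) ((m, v) :: s)).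
    by rewrite List.map_map; apply: List.map_ext => p; rewrite clsK.
  rewrite e msum_cls mzero_cls in hsum; move/cls_inj: hsum => hsum.
  have hs a : I a -> orb a (\sum_(p <- (m, v) :: s) coef (rep p.2) a).
    by move=> ha; have := hsum a ha; rewrite coef_nil subr0 coef_flatten Lmap big_map.
  have hv a : I a -> orb a (coef (rep v) a).
    move=> ha; case: (pselect (orb a (coef (rep v) a))) => // hn; exfalso.
    have em : m = orb a by apply: (W2 (x := rep v) hmax) => //; rewrite clsK.
    have hrest : orb a (\sum_(p <- s) coef (rep p.2) a).
      apply: ideal_sum; first exact: orb_ideal.
      move=> [m' v'] hin /=; case: (pselect (orb a (coef (rep v') a))) => // hn'.
      have [hmax' hw'] := proj1 (List.Forall_forall _ s) hF _ hin.
      have em' : m' = orb a by apply: (W2 (x := rep v') hmax') => //; rewrite /= clsK.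
      exfalso; apply: hm; rewrite em -em'; apply/List.in_map_iff; by exists (m', v').
    apply: hn; have := hs a ha; rewrite big_cons /= => h.
    have -> : coef (rep v) a = (coef (rep v) a + \sum_(p <- s) coef (rep p.2) a) - \sum_(p <- s) coef (rep p.2) a by ring.
    by apply: idealB => //; exact: orb_ideal.
  constructor.
    by rewrite /= -(clsK v) ?mzero_cls; apply: cls_eq => a ha; rewrite coef_nil subr0; apply: hv.
  apply: IH => //.
  have e' : List.map snd s = List.map cls (List.map (fun p => rep p.2) s).
    by rewrite List.map_map; apply: List.map_ext => p; rewrite clsK.
  rewrite e' msum_cls mzero_cls; apply: cls_eq => a ha.
  rewrite coef_nil subr0 coef_flatten Lmap big_map.
  have := hs a ha; rewrite big_cons /= => h.
  have -> : \sum_(p <- s) coef (rep p.2) a = (coef (rep v) a + \sum_(p <- s) coef (rep p.2) a) - coef (rep v) a by ring.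
  by apply: idealB => //; [exact: orb_ideal|apply: hv].
move=> m hm; case: (pselect (exists a, I a /\ m = orb a)) => [[a [ha em]]|hno].
  exists [:: cls [:: (a, 1)]]; split; first by constructor; [rewrite em; apply: W1|constructor].
  move=> v hv; have [x ex] := cls_surj v; exists [:: coef x a]; split => //.
  rewrite ex.
  have -> : @msum _ MIq (List.map (fun p : R * mcar MIq => mact 0 p.1 p.2) (List.combine [:: coef x a] [:: (cls [:: (a, 1)] : mcar MIq)]))
    = @madd _ MIq (@mact _ MIq 0 (coef x a) (cls [:: (a, 1)])) (mzero MIq) by [].
  rewrite mact_cls mzero_cls madd_cls; apply: cls_eq => a' ha'.
  rewrite coef_cat coef_nil addr0 coef_raw subr0 ha' coef_seq1 sp_0.
  case: eqP => [<-|na]; first by rewrite mulr1 subrr; apply: ideal_orb0.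
  rewrite mulr0 subr0; case: (pselect (orb a' (coef x a'))) => // hn; exfalso; apply: na.
  by apply: orb_inj; rewrite -em; apply: (W2 (x := x) hm) => //; rewrite -ex.
exists [::]; split; first by constructor.
move=> v hv; exists [::]; split => //; have [x ex] := cls_surj v.
rewrite ex /=; apply: cls_eq => a ha; rewrite coef_nil subr0.
case: (pselect (orb a (coef x a))) => // hn; exfalso; apply: hno; exists a; split => //.
by apply: (W2 (x := x) hm) => //; rewrite -ex.
Qed.


Lemma rawact_nil k r : rawact k r [::] = [::]. Proof. by []. Qed.

Lemma inI_conv a b c : I a -> I b -> a <= c -> c <= b -> I c.
Proof. rewrite /inI; case: lo => [l|]; case: hi => [h|] //=; lia. Qed.

Lemma Ipow1 j : J j -> Ip 1 j.
Proof.
by move=> hj; rewrite -[j]mul1r; apply: idprod_mul => //; rewrite /simg oppr0 sp_0.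
Qed.
Lemma Ipowm1 h : H h -> Ip (-1) (sp (-1) h).
Proof.
move=> hh; rewrite -[sp (-1) h]mul1r; apply: idprod_mul => //.
by rewrite /simg spA (_ : - Negz 0 + -1 = 0) // NegzE.
Qed.

Lemma isolate a (L : seq int) : exists q, ~ orb a q /\ forall b, b \in L -> b != a -> orb b q.
Proof.
elim: L => [|b L [q [hq hL]]]; first by exists 1; split => //; exact: orb_not1.
case: (eqVneq b a) => [eba|nba].
  exists q; split => // b'; rewrite in_cons => /orP [/eqP ->|h] nb; last exact: hL.
  by rewrite eba eqxx in nb.
have nba' : b <> a by apply/eqP.
have [y [hy ny]] := orb_neq nba'.
exists (q * y); split.
  by case/(proj2 (proj2 (orb_prime a))) => [/hq|/ny].
move=> b'; rewrite in_cons => /orP [/eqP ->|h] nb.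
  by apply: idealMl => //; exact: orb_ideal.
by apply: idealMr; [exact: orb_ideal|exact: hL].
Qed.

Lemma MI_simple : is_simple sigma sigmai H J MIq.
Proof.
split.
  have [a ha] := Hne; exists (cls [:: (a, 1)]); rewrite mzero_cls => /cls_inj /(_ a ha).
  rewrite coef_seq1 eqxx coef_nil subr0; exact: orb_not1.
move=> N [N0 [NA [NN NM]]].
case: (pselect (exists u, N u /\ u <> mzero MIq)) => [[u [hu nu]]|hno]; last first.
  left => x hx; case: (pselect (x = mzero MIq)) => // nx; exfalso; apply: hno; by exists x.
right.
have h0 d : Ip 0 d by [].
have S1 b c : I b -> ~ orb b c -> N (cls [:: (b, c)]) -> N (cls [:: (b, 1)]).
  move=> hb hc hN; have [d hd] := max_inv (orb_max b) hc.
  have := NM 0 d _ (h0 d) hN; rewrite mact_cls.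
  have -> : cls [:: (b, 1)] = cls (rawact 0 d [:: (b, c)]); last by [].
  apply: cls_eq => a ha; rewrite coef_raw subr0 ha !coef_seq1 sp_0.
  case: eqP => [<-|_]; last by rewrite mulr0 subr0; exact: ideal_orb0.
  by rewrite -opprB; apply: idealN => //; exact: orb_ideal.
have [a0 [ha0 hN0]] : exists a, I a /\ N (cls [:: (a, 1)]).
  have [x ex] := cls_surj u.
  have [a [ha na]] : exists a, I a /\ ~ orb a (coef x a).
    case: (pselect (exists a, I a /\ ~ orb a (coef x a))) => // hn; exfalso; apply: nu.
    rewrite ex mzero_cls; apply: cls_eq => a ha; rewrite coef_nil subr0.
    by case: (pselect (orb a (coef x a))) => // h'; exfalso; apply: hn; exists a.
  have [q [hq hqL]] := isolate a (map fst x).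
  exists a; split => //; apply: (S1 a (q * coef x a)) => //.
    by case/(proj2 (proj2 (orb_prime a))).
  have := NM 0 q _ (h0 q) hu; rewrite ex mact_cls.
  have -> : cls (rawact 0 q x) = cls [:: (a, q * coef x a)]; last by [].
  apply: cls_eq => a' ha'; rewrite coef_raw subr0 ha' sp_0 coef_seq1.
  case: (eqVneq a a') => [<-|naa]; first by rewrite subrr; exact: ideal_orb0.
  rewrite subr0; case: (boolP (a' \in map fst x)) => hin.
    by apply: idealMr; [exact: orb_ideal|apply: hqL => //; rewrite eq_sym].
  by rewrite coef_notin // mulr0; exact: ideal_orb0.
have S3 b : I b -> I (b + 1) -> N (cls [:: (b, 1)]) -> N (cls [:: (b + 1, 1)]).
  move=> hb hb1 hN; have [j [hj nj]] := nbrk_J (Hin hb hb1).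
  apply: (S1 (b + 1) j) => //.
  by have := NM 1 j _ (Ipow1 hj) hN; rewrite mact_cls rawact_cons hb sp1 mulr1 rawact_nil.
have S4 b : I b -> I (b + 1) -> N (cls [:: (b + 1, 1)]) -> N (cls [:: (b, 1)]).
  move=> hb hb1 hN; have [h [hh nh]] := nbrk_H (Hin hb hb1).
  apply: (S1 b (sp (-1) h)) => //.
    by rewrite (orb_spE (b := b + 1)) //; lia.
  have := NM (-1) _ _ (Ipowm1 hh) hN; rewrite mact_cls rawact_cons hb1 sp1 mulr1 rawact_nil.
  by have -> : b + 1 + -1 = b by lia.
have S5 b : I b -> N (cls [:: (b, 1)]).
  move=> hb; case: (lerP a0 b) => hab.
    have [k ek] : exists k : nat, b - a0 = Posz k by apply: int_nat; lia.
    have -> : b = a0 + k by lia.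
    have hk : I (a0 + k) by rewrite (_ : a0 + k = b) //; lia.
    elim: k {ek} hk => [|k IH] hk; first by rewrite addr0.
    have -> : a0 + k.+1 = (a0 + k) + 1 by lia.
    apply: S3; first (by apply: (inI_conv ha0 hk); lia); first by rewrite (_ : a0 + k + 1 = a0 + k.+1) //; lia.
    by apply: IH; apply: (inI_conv ha0 hk); lia.
  have [k ek] : exists k : nat, a0 - b = Posz k by apply: int_nat; lia.
  have -> : b = a0 - Posz k by lia.
  have hk : I (a0 - Posz k) by rewrite (_ : a0 - Posz k = b) //; lia.
  elim: k {ek} hk => [|k IH] hk; first by rewrite subr0.
  have e : a0 - Posz k.+1 + 1 = a0 - Posz k by lia.
  apply: S4 => //; first by rewrite e; apply: (inI_conv hk ha0); lia.
  by rewrite e; apply: IH; apply: (inI_conv hk ha0); lia.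
have S6 x : N (cls x).
  elim: x => [|[b c] x IH]; first by rewrite -mzero_cls.
  have -> : cls ((b, c) :: x) = @madd _ MIq (cls [:: (b, c)]) (cls x) by rewrite madd_cls.
  apply: NA => //.
  case: (boolP (I b)) => hb.
    have -> : cls [:: (b, c)] = @mact _ MIq 0 c (cls [:: (b, 1)]).
      rewrite mact_cls; apply: cls_eq => a ha; rewrite coef_raw subr0 ha sp_0 !coef_seq1.
      by case: eqP => _; rewrite ?mulr1 ?mulr0 subrr; exact: ideal_orb0.
    by apply: NM => //; exact: S5.
  have -> : cls [:: (b, c)] = mzero MIq; last by [].
  rewrite mzero_cls; apply: cls_eq => a ha; rewrite coef_seq1 coef_nil subr0.
  by case: eqP => [e|_]; [rewrite e ha in hb|exact: ideal_orb0].
by move=> v; have [x ->] := cls_surj v; exact: S6.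
Qed.

End MIsec.

Lemma InP (T : eqType) (x : T) (s : seq T) : List.In x s <-> x \in s.
Proof.
elim: s => [|y s IH] //=; rewrite in_cons; split.
  by case=> [->|/IH ->]; rewrite ?eqxx ?orbT.
by case/orP => [/eqP ->|/IH]; [left|right].
Qed.

Lemma NoDup_orb (L : seq int) : uniq L -> List.NoDup (List.map orb L).
Proof.
elim: L => [|a L IH] /=; first by constructor.
move=> /andP [ha hu]; constructor; last exact: IH.
move=> /List.in_map_iff [b [eb hb]]; move/orb_inj: eb => eb; subst b.
by move/InP: hb; rewrite (negbTE ha).
Qed.

Lemma partition_sum (T : eqType) (V : nmodType) (l : seq T) (f : T -> int) (F : T -> V) :
  \sum_(c <- undup (map f l)) \sum_(p <- l | f p == c) F p = \sum_(p <- l) F p.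
Proof.
under eq_bigr do rewrite big_mkcond.
rewrite exchange_big /=; apply: eq_big_seq => p hp.
rewrite (bigD1_seq (f p)) ?undup_uniq ?mem_undup ?map_f //= eqxx big1 ?addr0 //.
by move=> c nc; rewrite eq_sym (negbTE nc).
Qed.

Section AbsM.
Variable M : bmod R.
Hypothesis HM : is_bmod sigma sigmai H J M.
Definition Mt := mcar M.
HB.instance Definition _ := gen_eqMixin Mt.
HB.instance Definition _ := gen_choiceMixin Mt.
Lemma maddA' : associative (@madd R M : Mt -> Mt -> Mt).
Proof. by move=> x y z; case: HM => hA _; apply: hA. Qed.
Lemma maddC' : commutative (@madd R M : Mt -> Mt -> Mt).
Proof. by case: HM => _ [] hC _; apply: hC. Qed.
Lemma madd0' : left_id (mzero M : Mt) (@madd R M).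
Proof. by case: HM => _ [] _ [] h _; apply: h. Qed.
Lemma maddN' : left_inverse (mzero M : Mt) (@mopp R M) (@madd R M).
Proof. by case: HM => _ [] _ [] _ [] h _; apply: h. Qed.
HB.instance Definition _ := GRing.isZmodule.Build Mt maddA' maddC' madd0' maddN'.

Local Notation act n r x := (@mact R M n r x : Mt).

Lemma maddE (x y : Mt) : madd x y = x + y. Proof. by []. Qed.
Lemma mzeroE : (mzero M : Mt) = 0. Proof. by []. Qed.
Lemma moppE (x : Mt) : mopp x = - x. Proof. by []. Qed.

Lemma actD n r (x y : Mt) : Ip n r -> act n r (x + y) = act n r x + act n r y.
Proof. by case: HM => _ [] _ [] _ [] _ [] h _; apply: h. Qed.
Lemma actDr n r s (x : Mt) : Ip n r -> Ip n s -> act n (r + s) x = act n r x + act n s x.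
Proof. by case: HM => _ [] _ [] _ [] _ [] _ [] h _; apply: h. Qed.
Lemma actA n m r s (x : Mt) : Ip n r -> Ip m s -> act n r (act m s x) = act (n + m) (r * sp n s) x.
Proof. by case: HM => _ [] _ [] _ [] _ [] _ [] _ [] h _; apply: h. Qed.
Lemma act1 (x : Mt) : act 0 1 x = x.
Proof. by case: HM => _ [] _ [] _ [] _ [] _ [] _ [] _ h; apply: h. Qed.

Lemma act0 n r : Ip n r -> act n r (0 : Mt) = 0.
Proof. by move=> hr; apply: (@addrI _ (act n r (0 : Mt))); rewrite -actD // !addr0. Qed.
Lemma act0r n (x : Mt) : act n 0 x = 0.
Proof.
have h0 : Ip n 0 by apply: ideal0; apply: Ipow_ideal.
by apply: (addrI (act n 0 x)); rewrite -actDr // !addr0.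
Qed.
Lemma actN n r (x : Mt) : Ip n r -> act n (- r) x = - act n r x.
Proof.
move=> hr; have hr' : Ip n (- r) by apply: idealN => //; apply: Ipow_ideal.
by apply: (@addrI _ (act n r x)); rewrite -actDr // !addrN act0r.
Qed.
Lemma actB n r s (x : Mt) : Ip n r -> Ip n s -> act n (r - s) x = act n r x - act n s x.
Proof.
move=> hr hs; have hs' : Ip n (- s) by apply: idealN => //; apply: Ipow_ideal.
by rewrite actDr // actN.
Qed.
Lemma act_sum n r (T : Type) (l : seq T) (F : T -> Mt) : Ip n r ->
  act n r (\sum_(i <- l) F i) = \sum_(i <- l) act n r (F i).
Proof.
move=> hr; elim: l => [|a l IH]; first by rewrite !big_nil act0.
by rewrite !big_cons actD // IH.
Qed.
Lemma act_sumr n (T : Type) (l : seq T) (F : T -> R) (x : Mt) : (forall i, Ip n (F i)) ->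
  act n (\sum_(i <- l) F i) x = \sum_(i <- l) act n (F i) x.
Proof.
move=> hF; elim: l => [|a l IH]; first by rewrite !big_nil act0r.
rewrite !big_cons actDr ?IH //; apply: ideal_sum; first exact: Ipow_ideal.
by move=> *; apply: hF.
Qed.
Lemma msumE (l : seq Mt) : msum l = \sum_(x <- l) x.
Proof. elim: l => [|x l IH]; by rewrite ?big_nil // big_cons -IH. Qed.

Local Notation wsp m x := (@wspace R M m (x : Mt)).

Lemma wsp0 (m : R -> Prop) : wsp m 0.
Proof. by move=> q hq; rewrite act0. Qed.
Lemma wspD (m : R -> Prop) (x y : Mt) : wsp m x -> wsp m y -> wsp m (x + y).
Proof. by move=> hx hy q hq; rewrite actD // hx // hy // addr0. Qed.
Lemma wsp_sum (m : R -> Prop) (T : Type) (l : seq T) (F : T -> Mt) :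
  (forall i, List.In i l -> wsp m (F i)) -> wsp m (\sum_(i <- l) F i).
Proof.
elim: l => [|a l IH] h; first by rewrite big_nil; apply: wsp0.
by rewrite big_cons; apply: wspD; [apply: h; left|apply: IH => i hi; apply: h; right].
Qed.
Lemma wsp_shift c n s (y : Mt) : wsp (orb c) y -> Ip n s -> wsp (orb (c + n)) (act n s y).
Proof.
move=> hy hs q hq.
rewrite actA // add0r sp_0 mulrC.
have hq' : orb c (sp (- n) q) by rewrite (orb_spE (b := c + n)); [exact: hq|lia].
have := actA (n := n) (m := 0) (r := s) (s := sp (- n) q) y hs Logic.I.
rewrite addr0 spKV => <-; by rewrite hy // act0.
Qed.
Lemma wsp_kill (m : R -> Prop) e (y : Mt) : is_max_ideal m -> wsp m y -> ~ m e -> act 0 e y = 0 -> y = 0.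
Proof.
move=> hm hy he h; have [d hd] := max_inv hm he.
rewrite -[y]act1 (_ : 1 = d * e - (d * e - 1)); last by ring.
by rewrite actB // -(sp_0 e) -(add0r 0) -actA // h act0 // hy // subrr.
Qed.
Lemma wsp_act0 (m : R -> Prop) c (y : Mt) : wsp m y -> wsp m (act 0 c y).
Proof.
move=> hy q hq; rewrite actA // sp_0 mulrC (_ : c * q = c * sp 0 q) // -actA //.
by rewrite hy // act0.
Qed.

Lemma actNx n r (x : Mt) : Ip n r -> act n r (- x) = - act n r x.
Proof. by move=> hr; apply: (@addIr _ (act n r x)); rewrite -actD // !addNr act0. Qed.
Lemma wspN (m : R -> Prop) (x : Mt) : wsp m x -> wsp m (- x).
Proof. by move=> hx q hq; rewrite actNx // hx // oppr0. Qed.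
Lemma act_sumr_seq n (T : eqType) (l : seq T) (F : T -> R) (x : Mt) : (forall i, i \in l -> Ip n (F i)) ->
  act n (\sum_(i <- l) F i) x = \sum_(i <- l) act n (F i) x.
Proof.
elim: l => [|a l IH] hF; first by rewrite !big_nil act0r.
have hF' i : i \in l -> Ip n (F i) by move=> hi; apply: hF; rewrite in_cons hi orbT.
rewrite !big_cons actDr ?IH //; first by apply: hF; rewrite in_cons eqxx.
apply: ideal_sum; first exact: Ipow_ideal.
by move=> i /InP hi; apply: hF'.
Qed.

Hypothesis HW : is_weight M.

Lemma WU (l : seq (int * Mt)) : (forall p, p \in l -> wsp (orb p.1) p.2) ->
  \sum_(p <- l) p.2 = 0 -> forall c, \sum_(p <- l | p.1 == c) p.2 = 0.
Proof.
move=> hl hsum c.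
have [_ [hW2 _]] := HW.
pose L := undup (map fst l).
pose s := List.map (fun c => (orb c, \sum_(p <- l | p.1 == c) p.2 : Mt)) L.
have hnd : List.NoDup (List.map fst s) by rewrite List.map_map; exact: NoDup_orb (undup_uniq _).
have hF : List.Forall (fun p => is_max_ideal p.1 /\ wspace p.1 p.2) s.
  apply/List.Forall_forall => p /List.in_map_iff [c' [<- _]]; split; first exact: orb_max.
  rewrite /= big_mkcond; apply: wsp_sum => p' /InP hp' /=.
  case: eqP => [<-|_]; [exact: hl|exact: wsp0].
have hs : msum (List.map snd s) = mzero M.
  by rewrite msumE List.map_map Lmap big_map partition_sum hsum.
have /List.Forall_forall hz := hW2 s hnd hF hs.
case: (boolP (c \in L)) => hc.
  by have := hz (orb c, \sum_(p <- l | p.1 == c) p.2) (List.in_map _ _ _ (proj2 (InP _ _) hc)).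
rewrite big_seq_cond big1 // => p /andP [hp /eqP e].
by rewrite -e mem_undup map_f in hc.
Qed.

Hypothesis HS : is_simple sigma sigmai H J M.

Lemma gen (y : Mt) : y <> 0 -> forall x : Mt, exists l : seq (int * R),
  (forall p, p \in l -> Ip p.1 p.2) /\ x = \sum_(p <- l) act p.1 p.2 y.
Proof.
move=> ny.
pose N := fun x : mcar M => exists l : seq (int * R),
  (forall p, p \in l -> Ip p.1 p.2) /\ (x : Mt) = \sum_(p <- l) act p.1 p.2 y.
have hN : is_submod sigma sigmai H J N.
  split; first by exists [::]; rewrite big_nil.
  split.
    move=> x1 x2 [l1 [h1 e1]] [l2 [h2 e2]]; exists (l1 ++ l2); split.
      by move=> p; rewrite mem_cat => /orP [/h1|/h2].
    by rewrite big_cat -e1 -e2.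
  split.
    move=> x1 [l1 [h1 e1]]; exists [seq (p.1, - p.2) | p <- l1]; split.
      move=> p /mapP [q hq ->] /=; apply: idealN; [exact: Ipow_ideal|exact: h1].
    rewrite big_map moppE e1 -sumrN; apply: eq_big_seq => p hp /=.
    by rewrite actN //; apply: h1.
  move=> n r x1 hr [l1 [h1 e1]]; exists [seq (n + p.1, r * sp n p.2) | p <- l1]; split.
    by move=> p /mapP [q hq ->] /=; apply: Ipow_mul => //; apply: h1.
  rewrite big_map.
  rewrite e1 act_sum //; apply: eq_big_seq => p hp /=.
  by rewrite actA //; apply: h1.
have Ny : N y.
  by exists [:: (0, 1)]; split; [move=> p; rewrite inE => /eqP -> | rewrite big_seq1 act1].
case: (proj2 HS N hN) => [h0|hall]; last by move=> x; apply: hall.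
by exfalso; apply: ny; apply: h0.
Qed.

Lemma kill lo hi (Hlo : forall c, lo = Some c -> brk c) (Hhi : forall b, hi = Some b -> brk b)
  a n r (z : Mt) : wsp (orb a) z -> inI lo hi a -> ~~ inI lo hi (a + n) -> Ip n r -> act n r z = 0.
Proof.
move=> hz ha hn hr.
case: (pselect (act n r z = 0)) => // ny; exfalso.
set y := act n r z in ny.
have hy : wsp (orb (a + n)) y := wsp_shift hz hr.
have [l [hl ez]] := gen ny z.
pose L := (a, - z) :: [seq (a + n + p.1, act p.1 p.2 y) | p <- l].
have hsum : \sum_(p <- l | a + n + p.1 == a) act p.1 p.2 y = z.
  have h1 : forall p, p \in L -> wsp (orb p.1) p.2.
    move=> p; rewrite inE => /orP [/eqP -> | /mapP [q hq ->]] /=; first exact: wspN.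
    by apply: wsp_shift => //; apply: hl.
  have h2 : \sum_(p <- L) p.2 = 0 by rewrite big_cons big_map /= -ez addNr.
  have := WU h1 h2 a; rewrite big_cons /= eqxx big_map /=.
  by move=> h; apply/eqP; rewrite -subr_eq0 addrC; apply/eqP.
pose s := \sum_(p <- l | a + n + p.1 == a) p.2.
have hsi : forall p, p \in l -> Ip (- n) (if a + n + p.1 == a then p.2 else 0).
  move=> p hp; case: ifP => [/eqP e|_]; last by apply: ideal0; apply: Ipow_ideal.
  by have := hl p hp; rewrite (_ : p.1 = - n) //; lia.
have hs : Ip (- n) s.
  rewrite /s big_mkcond; apply: ideal_sum; first exact: Ipow_ideal.
  by move=> p /InP hp; apply: hsi.
have ez3 : z = act (- n) s y.
  rewrite /s big_mkcond act_sumr_seq // -{1}hsum big_mkcond; apply: eq_big_seq => p hp /=.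
  case: ifP => [/eqP e|_]; last by rewrite act0r.
  have e' : p.1 = - n by apply: (@addrI _ (a + n)); rewrite e addrK.
  by rewrite e'.
have hz0 : z = 0.
  rewrite ez3 /y actA // addNr hz //.
  apply: (BRK Hlo Hhi (a := a) (b := a + n) (m := n)) => //; lia.
by apply: ny; rewrite /y hz0 act0.
Qed.


Section Cl.
Variables lo hi : option int.
Hypothesis Hlo : forall c, lo = Some c -> brk c.
Hypothesis Hhi : forall b, hi = Some b -> brk b.
Hypothesis Hin : forall a, inI lo hi a -> inI lo hi (a + 1) -> ~ brk a.
Hypothesis Hne : exists a, inI lo hi a.
Local Notation I := (inI lo hi).
Local Notation MIq := (MI sigma sigmai m0 lo hi).
Local Notation cls := (cls sigma sigmai m0 lo hi).
Local Notation rep := (rep (sigma:=sigma) (sigmai:=sigmai) (m0:=m0) (lo:=lo) (hi:=hi)).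
Local Notation rawact := (rawact sigma sigmai lo hi).
Variable a0 : int.
Variable w : Mt.
Hypothesis hw : wsp (orb a0) w.
Hypothesis nw : w <> 0.
Hypothesis ha0 : I a0.

Lemma exE a : I a -> exists e, Ip (a - a0) e /\ ~ orb a e.
Proof.
move=> ha; case: (lerP a0 a) => hab.
  have [k ek] : exists k : nat, a - a0 = Posz k by apply: int_nat; lia.
  rewrite ek Ipow_pos; apply: Jprod_notin; first exact: orb_prime.
  move=> i hi'.
  have hc : I (a - Posz i - 1) by apply: (inI_conv ha0 ha); lia.
  have hc1 : I (a - Posz i - 1 + 1) by apply: (inI_conv ha0 ha); lia.
  have [j [hj nj]] := nbrk_J (Hin hc hc1).
  exists (sp i j); split; first by rewrite simg_sp.
  by rewrite (orb_spE (b := a - Posz i)); [rewrite (_ : a - Posz i = a - Posz i - 1 + 1) //; lia|lia].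
have [k ek] : exists k : nat, a0 - a - 1 = Posz k by apply: int_nat; lia.
have -> : a - a0 = Negz k by rewrite NegzE; lia.
rewrite Ipow_neg; apply: Hprod_notin; first exact: orb_prime.
move=> i hi'.
have hc : I (a + Posz i) by apply: (inI_conv ha ha0); lia.
have hc1 : I (a + Posz i + 1) by apply: (inI_conv ha ha0); lia.
have [h [hh nh]] := nbrk_H (Hin hc hc1).
exists (sp (Negz i) h); split; first by rewrite simg_sp.
by rewrite (orb_spE (b := a + Posz i + 1)) //; rewrite NegzE; lia.
Qed.

Lemma exG a : exists g, I a -> Ip (a - a0) g /\ orb a (g - 1).
Proof.
case: (boolP (I a)) => ha; last by exists 0.
have [e [he ne]] := exE ha; have [d hd] := max_inv (orb_max a) ne.
exists (d * e) => _; split => //; apply: idealMl => //; exact: Ipow_ideal.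
Qed.

Definition g a := proj1_sig (ClassicalEpsilon.constructive_indefinite_description _ (exG a)).
Lemma hg a : I a -> Ip (a - a0) (g a) /\ orb a (g a - 1).
Proof. by rewrite /g; case: (ClassicalEpsilon.constructive_indefinite_description _ _). Qed.

Definition wv a : Mt := act (a - a0) (g a) w.
Lemma wv_wsp a : I a -> wsp (orb a) (wv a).
Proof.
move=> ha; have := wsp_shift hw (proj1 (hg ha)).
by rewrite (_ : a0 + (a - a0) = a) //; lia.
Qed.

Lemma eqw k s s' : I (a0 + k) -> Ip k s -> Ip k s' -> orb (a0 + k) (s - s') -> act k s w = act k s' w.
Proof.
move=> hk hs hs' hd.
have ht : Ip k (s - s') by apply: idealB => //; exact: Ipow_ideal.
apply/eqP; rewrite -subr_eq0 -actB //; apply/eqP.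
have [he1 he2] := hg hk.
move: he1; rewrite (_ : a0 + k - a0 = k); last by lia.
set e := g (a0 + k) => he1.
have ne : ~ orb (a0 + k) e.
  move=> he; apply: (orb_not1 (a := a0 + k)).
  rewrite (_ : 1 = e - (e - 1)); last by ring.
  by apply: idealB => //; exact: orb_ideal.
apply: (wsp_kill (orb_max (a0 + k)) _ ne).
  exact: wsp_shift.
rewrite actA // add0r sp_0 mulrC.
have := actA (n := 0) (m := k) (r := s - s') (s := e) w Logic.I he1.
rewrite add0r sp_0 => <-.
by rewrite (wsp_shift hw he1) // act0.
Qed.

Definition G a c : Mt := if I a then act 0 c (wv a) else 0.
Lemma GD a c c' : G a (c + c') = G a c + G a c'.
Proof. by rewrite /G; case: ifP; rewrite ?addr0 // actDr. Qed.
Lemma G0 a : G a 0 = 0.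
Proof. by rewrite /G; case: ifP; rewrite ?act0r. Qed.
Lemma GN a c : G a (- c) = - G a c.
Proof. by rewrite /G; case: ifP; rewrite ?oppr0 // actN. Qed.

Definition phr (x : seq (int * R)) : Mt := \sum_(p <- x) G p.1 p.2.

Lemma phr_coef x (L : seq int) : uniq L -> {subset map fst x <= L} ->
  phr x = \sum_(a <- L) G a (coef x a).
Proof.
move=> uL; elim: x => [|[b c] x IH] hsub.
  by rewrite /phr big_nil big1 // => a _; rewrite coef_nil G0.
rewrite /phr big_cons -/(phr x) IH; last by move=> a ha; apply: hsub; rewrite /= in_cons ha orbT.
under [RHS]eq_bigr do rewrite coef_cons GD.
rewrite big_split /=; congr (_ + _).
have -> : \sum_(a <- L) G a (if b == a then c else 0) = \sum_(a <- L) (if a == b then G a c else 0).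
  by apply: eq_bigr => a _; rewrite eq_sym; case: eqP => // _; rewrite G0.
have hb : b \in L by apply: hsub; rewrite /= in_cons eqxx.
by rewrite (bigD1_seq b) //= eqxx big1 ?addr0 // => a /negPf ->.
Qed.

Lemma phr_wd x y : reln sigma sigmai m0 lo hi x y -> phr x = phr y.
Proof.
move=> h; pose L := undup (map fst (x ++ y)).
have uL : uniq L by apply: undup_uniq.
rewrite (phr_coef (L := L)) // ?(phr_coef (x := y) (L := L)) //; last first.
- by move=> a ha; rewrite mem_undup map_cat mem_cat ha ?orbT.
- by move=> a ha; rewrite mem_undup map_cat mem_cat ha ?orbT.
apply: eq_bigr => a _; rewrite /G; case: ifP => ha //.
apply/eqP; rewrite -subr_eq0 -actB //; apply/eqP.
by apply: (wv_wsp ha); apply: h.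
Qed.

Definition phi (u : mcar MIq) : Mt := phr (rep u).
Lemma phi_cls x : phi (cls x) = phr x.
Proof. by apply: phr_wd; apply: rep_cls. Qed.


Lemma phi_add (u v : mcar MIq) : phi (madd u v) = phi u + phi v.
Proof.
have [x ->] := cls_surj u; have [y ->] := cls_surj v.
by rewrite madd_cls !phi_cls /phr big_cat.
Qed.
Lemma phi_opp (u : mcar MIq) : phi (mopp u) = - phi u.
Proof.
have [x ->] := cls_surj u; rewrite mopp_cls !phi_cls /phr big_map -sumrN.
by apply: eq_bigr => p _; rewrite GN.
Qed.
Lemma phi_zero : phi (mzero MIq) = 0.
Proof. by rewrite mzero_cls phi_cls /phr big_nil. Qed.

Lemma TL b c n r : Ip n r -> I b -> G (b + n) (r * sp n c) = act n r (G b c).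
Proof.
move=> hr hb; have [hg1 hg2] := hg hb.
have e1 : act 0 c (act (b - a0) (g b) w) = act (b - a0) (c * g b) w by rewrite actA // add0r sp_0.
have hcg : Ip (b - a0) (c * g b) by apply: idealMl => //; exact: Ipow_ideal.
rewrite [G b c]/G hb /wv e1 actA //.
have hq : Ip n (r * sp n c) by apply: idealMr => //; exact: Ipow_ideal.
rewrite spM mulrA.
have hm := Ipow_mul hq hg1.
rewrite /G; case: ifP => hbn.
  have [hg1' hg2'] := hg hbn.
  rewrite /wv actA // add0r sp_0.
  rewrite (_ : n + (b - a0) = b + n - a0) in hm *; last by lia.
  apply: eqw => //.
  - by rewrite (_ : a0 + (b + n - a0) = b + n) //; lia.
  - by apply: idealMl => //; exact: Ipow_ideal.
  - rewrite (_ : a0 + (b + n - a0) = b + n); last by lia.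
    rewrite -mulrBr; apply: idealMl; first exact: orb_ideal.
    rewrite (_ : g (b + n) - sp n (g b) = (g (b + n) - 1) - sp n (g b - 1)); last by rewrite spB sp1; ring.
    by apply: idealB => //; [exact: orb_ideal|exact: orb_sp].
apply/esym; apply: (kill Hlo Hhi hw ha0) => //.
by rewrite (_ : a0 + (n + (b - a0)) = b + n) ?hbn //; lia.
Qed.

Lemma phi_act n r (u : mcar MIq) : Ip n r -> phi (mact n r u) = act n r (phi u).
Proof.
move=> hr; have [x ->] := cls_surj u; rewrite mact_cls !phi_cls.
elim: x => [|[b c] x IH]; first by rewrite /phr !big_nil act0.
rewrite rawact_cons /= /phr big_cons -/(phr x) actD //.
case: ifP => hb.
  by rewrite big_cons -/(phr (rawact n r x)) IH /= TL.
have G0' : G b c = 0 by rewrite /G hb.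
by rewrite -/(phr (rawact n r x)) IH G0' act0 // add0r.
Qed.

Lemma phi_nz : phi (cls [:: (a0, 1)]) = w.
Proof.
rewrite phi_cls /phr big_cons big_nil addr0 /= /G ha0 act1 /wv.
have [hg1 hg2] := hg ha0.
rewrite (_ : a0 - a0 = 0) in hg1 *; last by rewrite subrr.
rewrite -{2}(act1 w); apply: eqw => //; rewrite ?addr0 //.
Qed.

Lemma phi_inj0 (u : mcar MIq) : phi u = 0 -> u = mzero MIq.
Proof.
pose N := fun u : mcar MIq => phi u = 0.
have hN : is_submod sigma sigmai H J N.
  split; first exact: phi_zero.
  split; first by move=> x y; rewrite /N phi_add => -> ->; rewrite addr0.
  split; first by move=> x; rewrite /N phi_opp => ->; rewrite oppr0.
  by move=> n r x hr; rewrite /N phi_act // => ->; rewrite act0.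
case: (proj2 (MI_simple Hin Hne) N hN) => [h|hall]; first exact: h.
by exfalso; apply: nw; have := hall (cls [:: (a0, 1)]); rewrite /N phi_nz.
Qed.

Lemma phi_inj (u v : mcar MIq) : phi u = phi v -> u = v.
Proof.
move=> e; have : phi (madd u (mopp v)) = 0 by rewrite phi_add phi_opp e subrr.
move/phi_inj0; have [x ->] := cls_surj u; have [y ->] := cls_surj v.
rewrite mopp_cls madd_cls mzero_cls => /cls_inj h; apply: cls_eq => a ha.
by have := h a ha; rewrite coef_cat coef_neg coef_nil subr0.
Qed.

Lemma phi_surj (y : mcar M) : exists u, phi u = y.
Proof.
pose N := fun y : mcar M => exists u, phi u = y.
have hN : is_submod sigma sigmai H J N.
  split; first by exists (mzero MIq); rewrite phi_zero.
  split; first by move=> x1 x2 [u1 <-] [u2 <-]; exists (madd u1 u2); rewrite phi_add.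
  split; first by move=> x1 [u1 <-]; exists (mopp u1); rewrite phi_opp.
  by move=> n r x1 hr [u1 <-]; exists (mact n r u1); rewrite phi_act.
case: (proj2 HS N hN) => [h|hall]; last exact: hall.
by exfalso; apply: nw; apply: h; exists (cls [:: (a0, 1)]); rewrite phi_nz.
Qed.

Lemma classify : bmod_iso sigma sigmai H J M MIq.
Proof.
pose f y := proj1_sig (ClassicalEpsilon.constructive_indefinite_description _ (phi_surj y)).
have hf y : phi (f y) = y by rewrite /f; case: (ClassicalEpsilon.constructive_indefinite_description _ _).
exists f; split.
  by exists phi => [y|u]; [exact: hf|apply: phi_inj; exact: hf].
split.
  by move=> x y; apply: phi_inj; rewrite phi_add !hf.
by move=> n r x hr; apply: phi_inj; rewrite phi_act // !hf.
Qed.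

End Cl.
End AbsM.

Lemma MI_idem lo hi (z : mcar (MI sigma sigmai m0 lo hi)) : madd z z = z -> z = mzero _.
Proof.
have [x ->] := cls_surj z; rewrite madd_cls => /cls_inj h.
rewrite mzero_cls; apply: cls_eq => a ha; have := h a ha.
by rewrite coef_cat coef_nil subr0 addrK.
Qed.

Lemma MI_supp lo hi a0 (v : mcar (MI sigma sigmai m0 lo hi)) :
  wspace (orb a0) v -> v <> mzero _ -> inI lo hi a0.
Proof.
move=> hv nv; case: (boolP (inI lo hi a0)) => // hn; exfalso; apply: nv.
have [x ex] := cls_surj v; rewrite ex mzero_cls; apply: cls_eq => a ha.
rewrite coef_nil subr0; case: (pselect (orb a (coef x a))) => // hc; exfalso.
have hv' : @wspace _ (MI sigma sigmai m0 lo hi) (orb a0) (cls sigma sigmai m0 lo hi x) by rewrite -ex.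
have e := W2 (orb_max a0) hv' ha hc.
have : a0 = a by apply: orb_inj.
by move=> ea; rewrite ea ha in hn.
Qed.

Lemma iso_supp (M : bmod R) lo hi a0 (w : mcar M) : is_bmod sigma sigmai H J M ->
  wspace (orb a0) w -> w <> mzero M ->
  bmod_iso sigma sigmai H J M (MI sigma sigmai m0 lo hi) -> inI lo hi a0.
Proof.
move=> HM hw nw [f [hb [hadd hact]]].
have f0 : f (mzero M) = mzero _.
  apply: MI_idem; rewrite -hadd; congr f.
  by case: HM => _ [] _ [] h _; apply: h.
apply: (MI_supp (v := f w)).
  move=> q hq; rewrite -hact // hw //.
by move=> e; apply: nw; apply: (bij_inj hb); rewrite e f0.
Qed.

Lemma weight_vec (M : bmod R) : is_bmod sigma sigmai H J M -> is_simple sigma sigmai H J M ->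
  is_weight M -> supp_in_orbit sigma sigmai m0 M ->
  exists a0 (w : mcar M), wspace (orb a0) w /\ w <> mzero M.
Proof.
move=> HM [[v nv] _] [hW1 _] hsupp.
have [s [hs ev]] := hW1 v.
case: (pselect (exists p, List.In p s /\ p.2 <> mzero M)) => [[[m u] [hin nu]]|hno].
  have [hm hu] := proj1 (List.Forall_forall _ s) hs _ hin.
  have [a ea] := hsupp m hm (ex_intro _ u (conj hu nu)).
  by exists a, u; rewrite -ea.
exfalso; apply: nv; rewrite ev.
elim: s {hs ev} hno => [|p s IH] hno //=.
have -> : p.2 = mzero M.
  by case: (pselect (p.2 = mzero M)) => // h; exfalso; apply: hno; exists p; split => //; left.
rewrite IH; first by case: HM => _ [] _ [] h _; apply: h.
by move=> [q [hq nq]]; apply: hno; exists q; split => //; right.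
Qed.

Lemma max_ex (P : int -> Prop) B : (exists c, P c) -> (forall c, P c -> c <= B) ->
  exists c, P c /\ forall c', P c' -> c' <= c.
Proof.
move=> [c0 hc0] hB; case: (pselect (exists c, P c /\ forall c', P c' -> c' <= c)) => // hno.
have step c : P c -> exists c', P c' /\ c < c'.
  move=> hc; case: (pselect (exists c', P c' /\ c < c')) => // h; exfalso; apply: hno.
  exists c; split => // c' hc'; case: (lerP c' c) => // hlt; exfalso; apply: h; by exists c'.
have iter k : exists c, P c /\ c0 + Posz k <= c.
  elim: k => [|k [c [hc hk]]]; first by exists c0; split => //; lia.
  have [c' [hc' hlt]] := step c hc; exists c'; split => //; lia.
have [k ek] : exists k : nat, B - c0 + 1 = Posz k by apply: int_nat; have := hB c0 hc0; lia.
have [c [hc hk]] := iter k; have := hB c hc; lia.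
Qed.

Lemma min_ex (P : int -> Prop) B : (exists c, P c) -> (forall c, P c -> B <= c) ->
  exists c, P c /\ forall c', P c' -> c <= c'.
Proof.
move=> [c0 hc0] hB.
have h1 : exists c, P (- c) by exists (- c0); rewrite opprK.
have h2 : forall c, P (- c) -> c <= - B by move=> c hc; have := hB _ hc; lia.
have [c [hc hmax]] := max_ex (P := fun c => P (- c)) h1 h2.
exists (- c); split => // c' hc'.
by have := hmax (- c'); rewrite opprK => /(_ hc'); lia.
Qed.

Lemma valid_hyps n lo : in_beta' sigma sigmai H J m0 n -> is_nminus sigma sigmai H J m0 n lo ->
  [/\ (forall c, lo = Some c -> brk c), (forall b, n = Some b -> brk b),
      (forall a, inI lo n a -> inI lo n (a + 1) -> ~ brk a) & (exists a, inI lo n a)].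
Proof.
move=> hn hlo; split.
- by move=> c elo; rewrite elo in hlo; case: hlo.
- by move=> b en; rewrite en in hn.
- move=> a h1 h2 hb.
  have hlt : lt_opt a n by move: h2; rewrite /inI /lt_opt; case: lo {hlo h1}; case: n {hn} => //= *; lia.
  case: lo hlo h1 h2 => [c|] /=.
    by rewrite /inI /= => -[_ [_ hmax]] /andP [hca _] _; have := hmax a hb hlt; lia.
  by move=> hnone _ _; apply: (hnone a hb hlt).
- case: lo hlo => [c|]; case: n hn => [b|] /=.
  + by move=> _ [_ [hcb _]]; exists b; rewrite /inI /=; lia.
  + by move=> _ _; exists (c + 1); rewrite /inI /=; lia.
  + by move=> _ _; exists b; rewrite /inI /=; lia.
  + by move=> _ _; exists 0.
Qed.

Lemma find_interval a0 : (exists b, brk b) -> exists n lo,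
  in_beta' sigma sigmai H J m0 n /\ is_nminus sigma sigmai H J m0 n lo /\ inI lo n a0.
Proof.
move=> hex.
case: (pselect (exists b, brk b /\ a0 <= b)) => [hge|hno].
  have [b [[hb hab] hmin]] := min_ex (P := fun b => brk b /\ a0 <= b) (B := a0) hge (fun c h => proj2 h).
  exists (Some b).
  case: (pselect (exists c, brk c /\ c < a0)) => [hlt|hnl].
    have [c [[hc hca] hmax]] := max_ex (P := fun c => brk c /\ c < a0) (B := a0) hlt
      (fun c h => ltW (proj2 h)).
    exists (Some c); split => //; split; last by rewrite /inI /=; lia.
    split => //; split; first by rewrite /lt_opt; lia.
    move=> c' hc' hlt'; rewrite /lt_opt in hlt'.
    case: (lerP a0 c') => h; last by apply: hmax.
    by have := hmin c' (conj hc' h); lia.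
  exists None; split => //; split; last by rewrite /inI /=.
  move=> c' hc' hlt'; rewrite /lt_opt in hlt'; apply: hnl; exists c'; split => //.
  case: (lerP a0 c') => h //; by have := hmin c' (conj hc' h); lia.
have hall c : brk c -> c < a0.
  by move=> hc; case: (lerP a0 c) => h //; exfalso; apply: hno; exists c.
have [c [hc hmax]] := max_ex (B := a0) hex (fun c h => ltW (hall c h)).
exists None, (Some c); split; first by exists c.
split; first by split => //; split => // c' hc' _; apply: hmax.
by rewrite /inI /= andbT; apply: hall.
Qed.

Lemma interval_facts n lo a0 : in_beta' sigma sigmai H J m0 n -> is_nminus sigma sigmai H J m0 n lo ->
  inI lo n a0 -> forall c, brk c -> lt_opt c n -> c < a0.
Proof.
move=> hn hlo hi c hc hlt; case: lo hlo hi => [c1|] /=.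
  by rewrite /inI /= => -[_ [_ hmax]] /andP [hca _]; have := hmax c hc hlt; lia.
by move=> hnone; exfalso; apply: (hnone c hc hlt).
Qed.

Lemma uniq_interval a0 n lo n' lo' :
  in_beta' sigma sigmai H J m0 n -> is_nminus sigma sigmai H J m0 n lo -> inI lo n a0 ->
  in_beta' sigma sigmai H J m0 n' -> is_nminus sigma sigmai H J m0 n' lo' -> inI lo' n' a0 -> n' = n.
Proof.
move=> hn hlo hi hn' hlo' hi'.
have F := interval_facts hn hlo hi; have F' := interval_facts hn' hlo' hi'.
case: n hn hlo hi F => [b|] hn hlo hi F; case: n' hn' hlo' hi' F' => [b'|] hn' hlo' hi' F' //.
- have h1 : a0 <= b by move: hi; rewrite /inI; case: lo {hlo} => /= *; lia.
  have h2 : a0 <= b' by move: hi'; rewrite /inI; case: lo' {hlo'} => /= *; lia.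
  case: (ltrgtP b b') => [hlt|hlt|->] //.
    by have := F' b hn hlt; lia.
  by have := F b' hn' hlt; lia.
- have h1 : a0 <= b by move: hi; rewrite /inI; case: lo {hlo} => /= *; lia.
  by have := F' b hn isT; lia.
- have h2 : a0 <= b' by move: hi'; rewrite /inI; case: lo' {hlo'} => /= *; lia.
  by have := F b' hn' isT; lia.
Qed.

Lemma main_thm :
  ((forall a : int, ~ brk a) ->
     let MO := MO sigma sigmai m0 in
     is_bmod sigma sigmai H J MO /\ is_simple sigma sigmai H J MO /\ is_weight MO /\
     (forall M : bmod R, is_bmod sigma sigmai H J M -> is_simple sigma sigmai H J M ->
        is_weight M -> supp_in_orbit sigma sigmai m0 M ->
        bmod_iso sigma sigmai H J M MO))
  /\
  ((exists a : int, brk a) ->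
     (forall n lo : option int, in_beta' sigma sigmai H J m0 n ->
        is_nminus sigma sigmai H J m0 n lo ->
        is_bmod sigma sigmai H J (MOn sigma sigmai m0 lo n) /\
        is_simple sigma sigmai H J (MOn sigma sigmai m0 lo n) /\
        is_weight (MOn sigma sigmai m0 lo n)) /\
     (forall M : bmod R, is_bmod sigma sigmai H J M -> is_simple sigma sigmai H J M ->
        is_weight M -> supp_in_orbit sigma sigmai m0 M ->
        exists n lo : option int,
          in_beta' sigma sigmai H J m0 n /\ is_nminus sigma sigmai H J m0 n lo /\
          bmod_iso sigma sigmai H J M (MOn sigma sigmai m0 lo n) /\
          (forall n' lo' : option int, in_beta' sigma sigmai H J m0 n' ->
             is_nminus sigma sigmai H J m0 n' lo' ->
             bmod_iso sigma sigmai H J M (MOn sigma sigmai m0 lo' n') -> n' = n))).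
Proof.
split.
  move=> hnob MO; rewrite /MO /Defs.MO.
  have Hlo : forall c, (None : option int) = Some c -> brk c by [].
  have Hhi : forall c, (None : option int) = Some c -> brk c by [].
  have Hin : forall a, inI None None a -> inI None None (a + 1) -> ~ brk a by move=> a _ _; apply: hnob.
  have Hne : exists a, inI None None a by exists 0.
  split; first exact: (MI_bmod Hlo Hhi).
  split; first exact: (MI_simple Hin Hne).
  split; first exact: MI_weight.
  move=> M HM HS HW Hsupp; have [a0 [w [hw nw]]] := weight_vec HM HS HW Hsupp.
  exact: (classify (HM := HM) HW HS Hlo Hhi Hin Hne hw nw isT).
move=> hb; split.
  move=> n lo hn hlo; have [Hlo Hhi Hin Hne] := valid_hyps hn hlo; rewrite /MOn.
  split; first exact: (MI_bmod Hlo Hhi).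
  split; first exact: (MI_simple Hin Hne).
  exact: MI_weight.
move=> M HM HS HW Hsupp; have [a0 [w [hw nw]]] := weight_vec HM HS HW Hsupp.
have [n [lo [hn [hlo hi]]]] := find_interval a0 hb.
have [Hlo Hhi Hin Hne] := valid_hyps hn hlo.
exists n, lo; split => //; split => //; split.
  exact: (classify (HM := HM) HW HS Hlo Hhi Hin Hne hw nw hi).
move=> n' lo' hn' hlo' hiso; have hi' := iso_supp HM hw nw hiso.
exact: (uniq_interval hn hlo hi hn' hlo' hi').
Qed.

End Main.

Theorem theorem3p9
  (k : fieldType) (R : idomainType) (phi : {rmorphism k -> R})
  (sigma : {rmorphism R -> R}) (sigmai : R -> R)
  (Hs1 : cancel sigma sigmai) (Hs2 : cancel sigmai sigma)
  (Hk : forall c : k, sigma (phi c) = phi c)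
  (H J : R -> Prop) (HH : is_ideal H) (HJ : is_ideal J)
  (Hnz : forall n : int, exists x, Ipow sigma sigmai H J n x /\ x <> 0)
  (m0 : R -> Prop) (Hm0 : is_max_ideal m0)
  (Hinf : orbit_infinite sigma sigmai m0) :
  ((forall a : int, ~ brk sigma sigmai H J m0 a) ->
     let MO := MO sigma sigmai m0 in
     is_bmod sigma sigmai H J MO /\ is_simple sigma sigmai H J MO /\ is_weight MO /\
     (forall M : bmod R, is_bmod sigma sigmai H J M -> is_simple sigma sigmai H J M ->
        is_weight M -> supp_in_orbit sigma sigmai m0 M ->
        bmod_iso sigma sigmai H J M MO))
  /\
  ((exists a : int, brk sigma sigmai H J m0 a) ->
     (forall n lo : option int, in_beta' sigma sigmai H J m0 n ->
        is_nminus sigma sigmai H J m0 n lo ->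
        is_bmod sigma sigmai H J (MOn sigma sigmai m0 lo n) /\
        is_simple sigma sigmai H J (MOn sigma sigmai m0 lo n) /\
        is_weight (MOn sigma sigmai m0 lo n)) /\
     (forall M : bmod R, is_bmod sigma sigmai H J M -> is_simple sigma sigmai H J M ->
        is_weight M -> supp_in_orbit sigma sigmai m0 M ->
        exists n lo : option int,
          in_beta' sigma sigmai H J m0 n /\ is_nminus sigma sigmai H J m0 n lo /\
          bmod_iso sigma sigmai H J M (MOn sigma sigmai m0 lo n) /\
          (forall n' lo' : option int, in_beta' sigma sigmai H J m0 n' ->
             is_nminus sigma sigmai H J m0 n' lo' ->
             bmod_iso sigma sigmai H J M (MOn sigma sigmai m0 lo' n') -> n' = n))).
Proof. exact: (main_thm Hs1 Hs2 HH HJ Hm0 Hinf). Qed.
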